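(* Let $m\ge1$, $\tau_1\ge\tau_2\ge\dots\ge\tau_m>0$, $b_1,\dots,b_m>0$, and $\psi(u)=\frac12u^2+\sum_{j=1}^mb_j\sqrt{\tau_j-u^2}$. Let $\omega$ be a differentiable function on $(0,\infty)$ with $|\omega^{(j)}(u)|\le a_0u^{-j}$ for $j=0,1$ and all $u>0$. Let $\chi$ be a smooth non-decreasing function on $\mathbb{R}$ with $\chi(\lambda)=0$ for $\lambda\le\frac14$ and $\chi(\lambda)=1$ for $\lambda\ge\frac12$. Then there is a constant $C_0$ depending only on $a_0$ (and $\chi$) such that for every $1\le k\le m$, \[ \Bigl|\int_0^\infty e^{i\psi(u)}\Bigl(1-\chi\Bigl(\frac{u}{\sqrt{\tau_m}}\Bigr)\Bigr)\omega(u)\frac{u}{\sqrt{\tau_k}}\,du\Bigr|\le C_0\min\Bigl(\tau_1^{1/4},\ m^{3/2}b_k^{-1}\max_\ell b_\ell\Bigr). \]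
   Context: The integrand vanishes for $u\ge\frac12\sqrt{\tau_m}$, so only the values of $\psi$ on $[0,\frac12\sqrt{\tau_m}]$ matter. *)

(* Defs.v *)
From Stdlib Require Import Reals List.
From Coquelicot Require Import Coquelicot.
Open Scope R_scope.

Definition expi (x : R) : C := (cos x, sin x).

Definition psi (m : nat) (tau b : nat -> R) (u : R) : R :=
  u ^ 2 / 2 + sum_n_m (fun j => b j * sqrt (tau j - u ^ 2)) 1 m.

Definition maxb (m : nat) (b : nat -> R) : R :=
  fold_right Rmax (b 1%nat) (map b (seq 1 m)).

Definition integrand (m k : nat) (tau b : nat -> R) (chi omega : R -> R)
  (u : R) : C :=
  scal ((1 - chi (u / sqrt (tau m))) * omega u * (u / sqrt (tau k)))
       (expi (psi m tau b u)).

(* Main.v *)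
Require Import Defs.
From Stdlib Require Import Reals List Lra Lia Classical.
From Coquelicot Require Import Coquelicot.
Open Scope R_scope.

Lemma isd_plus (f g : R -> R) x df dg : is_derive f x df -> is_derive g x dg ->
  is_derive (fun y => f y + g y) x (df + dg).
Proof. intros. apply (is_derive_plus f g); auto. Qed.
Lemma isd_minus (f g : R -> R) x df dg : is_derive f x df -> is_derive g x dg ->
  is_derive (fun y => f y - g y) x (df - dg).
Proof. intros. apply (is_derive_minus f g); auto. Qed.
Lemma isd_opp (f : R -> R) x df : is_derive f x df ->
  is_derive (fun y => - f y) x (- df).
Proof. intros. apply (is_derive_opp f); auto. Qed.
Lemma isd_mult (f g : R -> R) x df dg : is_derive f x df -> is_derive g x dg ->
  is_derive (fun y => f y * g y) x (df * g x + f x * dg).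
Proof. intros. apply (is_derive_mult f g); auto. intros; apply Rmult_comm. Qed.
Lemma isd_ext (f g : R -> R) x l l' : (forall y, f y = g y) -> l = l' -> is_derive f x l -> is_derive g x l'.
Proof. intros H1 H2 H3. subst. apply is_derive_ext with f; auto. Qed.

Lemma isd_cont (h : R -> R) x l : is_derive h x l -> continuity_pt h x.
Proof. intros H. apply derivable_continuous_pt. exists l. apply is_derive_Reals. exact H. Qed.

Lemma mono_deriv (h dh : R -> R) a b :
  a <= b ->
  (forall x, a <= x <= b -> is_derive h x (dh x)) ->
  (forall x, a <= x <= b -> 0 <= dh x) -> h a <= h b.
Proof.
  intros Hab Hd Hpos.
  destruct (MVT_gen h a b dh) as [c [Hc Heq]].
  - intros x Hx. apply Hd. rewrite Rmin_left, Rmax_right in Hx; lra.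
  - intros x Hx. rewrite Rmin_left, Rmax_right in Hx by lra.
    apply (isd_cont h x (dh x)). apply Hd; lra.
  - rewrite Rmin_left, Rmax_right in Hc by lra.
    assert (0 <= dh c * (b - a)). { apply Rmult_le_pos; [apply Hpos; lra| lra]. }
    lra.
Qed.

Lemma ibp_core (p Q Rr dQ dR : R -> R) c e a b :
  c < a -> a <= b -> b < e ->
  (forall u, c < u < e -> continuous p u) ->
  (forall u, a <= u <= b -> is_derive Q u (dQ u)) ->
  (forall u, a <= u <= b -> is_derive Rr u (dR u)) ->
  (forall u, a <= u <= b -> Rabs (dQ u - p u) <= dR u) ->
  ex_RInt p a b /\ Rabs (RInt p a b) <= Rabs (Q a) + Rabs (Q b) + (Rr b - Rr a).
Proof.
  intros Hca Hab Hbe Hc HQ HR Hb.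
  assert (Hex : forall v, c < v < e -> ex_RInt p a v).
  { intros v Hv. apply (@ex_RInt_continuous R_CompleteNormedModule). intros z Hz.
    apply Hc. split.
    - apply Rlt_le_trans with (Rmin a v); [|apply Hz]. apply Rmin_case; lra.
    - apply Rle_lt_trans with (Rmax a v); [apply Hz|]. apply Rmax_case; lra. }
  assert (HP : forall u, a <= u <= b -> is_derive (fun v => RInt p a v) u (p u)).
  { intros u Hu. apply is_derive_RInt with a.
    - assert (Hd : 0 < Rmin (u - c) (e - u)) by (apply Rmin_case; lra).
      exists (mkposreal _ Hd). intros v Hv. apply RInt_correct. apply Hex.
      unfold ball in Hv; simpl in Hv; unfold AbsRing_ball, abs, minus, plus, opp in Hv; simpl in Hv.
      apply Rabs_def2 in Hv. destruct Hv as [H1 H2].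
      assert (Rmin (u - c) (e - u) <= u - c) by apply Rmin_l.
      assert (Rmin (u - c) (e - u) <= e - u) by apply Rmin_r. lra.
    - apply Hc; lra. }
  split. { apply Hex; lra. }
  assert (H1 : (fun v => RInt p a v - Q v + Rr v) a <= (fun v => RInt p a v - Q v + Rr v) b).
  { apply (mono_deriv (fun v => RInt p a v - Q v + Rr v) (fun u => p u - dQ u + dR u)); auto.
    - intros x Hx. apply isd_plus. apply isd_minus; auto. auto.
    - intros x Hx. specialize (Hb x Hx). apply Rabs_le_between in Hb. lra. }
  assert (H2 : (fun v => - (RInt p a v - Q v - Rr v)) a <= (fun v => - (RInt p a v - Q v - Rr v)) b).
  { apply (mono_deriv (fun v => - (RInt p a v - Q v - Rr v)) (fun u => - (p u - dQ u - dR u))); auto.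
    - intros x Hx. apply isd_opp. apply isd_minus; auto. apply isd_minus; auto.
    - intros x Hx. specialize (Hb x Hx). apply Rabs_le_between in Hb. lra. }
  simpl in H1, H2. rewrite RInt_point in H1, H2. unfold zero in H1, H2; simpl in H1, H2.
  apply Rabs_le. pose proof (Rabs_pos (Q a)). pose proof (Rabs_pos (Q b)).
  pose proof (Rle_abs (Q a)). pose proof (Rle_abs (Q b)).
  pose proof (Rle_abs (- Q a)). pose proof (Rle_abs (- Q b)).
  rewrite Rabs_Ropp in *. split; lra.
Qed.

Ltac rring := match goal with |- ?a = ?b => change (@eq R a b) end; ring.
Ltac rfield := match goal with |- ?a = ?b => change (@eq R a b) end; field.
Lemma isd_const (c x : R) : is_derive (fun _ => c) x 0.
Proof. apply (is_derive_const c). Qed.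
Lemma isd_id (x : R) : is_derive (fun y => y) x 1.
Proof. apply (is_derive_id x). Qed.
Lemma isd_comp (f g : R -> R) x df dg : is_derive f (g x) df -> is_derive g x dg ->
  is_derive (fun y => f (g y)) x (dg * df).
Proof. intros. apply (is_derive_comp f g); auto. Qed.
Lemma isd_inv (f : R -> R) x l : is_derive f x l -> f x <> 0 ->
  is_derive (fun y => / f y) x (- l / f x ^ 2).
Proof. intros. apply is_derive_inv; auto. Qed.

Lemma sum1_S (h : nat -> R) n : sum_n_m h 1 (S n) = sum_n_m h 1 n + h (S n).
Proof. rewrite sum_n_Sm by lia. reflexivity. Qed.
Lemma sum1_0 (h : nat -> R) : sum_n_m h 1 0 = 0.
Proof. rewrite sum_n_m_zero by lia. reflexivity. Qed.

Lemma sum1_le (h g : nat -> R) n : (forall j, (1 <= j <= n)%nat -> h j <= g j) ->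
  sum_n_m h 1 n <= sum_n_m g 1 n.
Proof.
  induction n; intros H. rewrite !sum1_0; lra.
  rewrite !sum1_S. assert (h (S n) <= g (S n)) by (apply H; lia).
  assert (sum_n_m h 1 n <= sum_n_m g 1 n) by (apply IHn; intros; apply H; lia). lra.
Qed.

Lemma sum1_nonneg (h : nat -> R) n : (forall j, (1 <= j <= n)%nat -> 0 <= h j) ->
  0 <= sum_n_m h 1 n.
Proof.
  intros H. replace 0 with (sum_n_m (fun _ => 0) 1 n). apply sum1_le; auto.
  induction n. apply sum1_0. rewrite sum1_S, IHn. lra. intros; apply H; lia.
Qed.

Lemma sum1_term (h : nat -> R) n l : (forall j, (1 <= j <= n)%nat -> 0 <= h j) ->
  (1 <= l <= n)%nat -> h l <= sum_n_m h 1 n.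
Proof.
  induction n; intros H Hl. lia.
  rewrite sum1_S. destruct (Nat.eq_dec l (S n)).
  - subst. assert (0 <= sum_n_m h 1 n) by (apply sum1_nonneg; intros; apply H; lia). lra.
  - assert (h l <= sum_n_m h 1 n) by (apply IHn; [intros; apply H; lia| lia]).
    assert (0 <= h (S n)) by (apply H; lia). lra.
Qed.

Lemma sum1_const (c : R) n : sum_n_m (fun _ => c) 1 n = INR n * c.
Proof. induction n. rewrite sum1_0. simpl; lra. rewrite sum1_S, IHn, S_INR. lra. Qed.

Lemma sum1_scal (c : R) (h : nat -> R) n : sum_n_m (fun j => c * h j) 1 n = c * sum_n_m h 1 n.
Proof. induction n. rewrite !sum1_0; lra. rewrite !sum1_S, IHn. lra. Qed.

Lemma sum1_ext (h g : nat -> R) n : (forall j, (1 <= j <= n)%nat -> h j = g j) ->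
  sum_n_m h 1 n = sum_n_m g 1 n.
Proof. intros. apply sum_n_m_ext_loc. intros; apply H; lia. Qed.

Lemma sum1_avg (h : nat -> R) n s : (0 < n)%nat -> 0 < s -> s <= sum_n_m h 1 n ->
  exists l, (1 <= l <= n)%nat /\ s / (2 * INR n) <= h l.
Proof.
  intros Hn Hs Hsum. apply NNPP. intros Hno.
  assert (Hall : forall j, (1 <= j <= n)%nat -> h j <= s / (2 * INR n)).
  { intros j Hj. destruct (Rle_lt_dec (h j) (s / (2 * INR n))); auto.
    exfalso; apply Hno; exists j; split; auto; lra. }
  apply sum1_le in Hall. rewrite sum1_const in Hall.
  assert (0 < INR n) by (apply lt_0_INR; lia).
  replace (INR n * (s / (2 * INR n))) with (s / 2) in Hall by (field; lra). lra.
Qed.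

Lemma sum1_derive (h dh : nat -> R -> R) n x :
  (forall j, (1 <= j <= n)%nat -> is_derive (h j) x (dh j x)) ->
  is_derive (fun y => sum_n_m (fun j => h j y) 1 n) x (sum_n_m (fun j => dh j x) 1 n).
Proof.
  induction n; intros H.
  - apply isd_ext with (fun _ => 0) 0. intros; rewrite sum1_0; auto. rewrite sum1_0; auto.
    apply (is_derive_const 0).
  - apply isd_ext with (fun y => sum_n_m (fun j => h j y) 1 n + h (S n) y)
      (sum_n_m (fun j => dh j x) 1 n + dh (S n) x).
    intros; rewrite sum1_S; auto. rewrite sum1_S; auto.
    apply isd_plus. apply IHn. intros; apply H; lia. apply H; lia.
Qed.

Lemma maxb_ge (m : nat) (b : nat -> R) j : (1 <= j <= m)%nat -> b j <= maxb m b.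
Proof.
  intros Hj. unfold maxb.
  assert (Hin : In (b j) (map b (seq 1 m))). { apply in_map. apply in_seq. lia. }
  generalize (b 1%nat). induction (map b (seq 1 m)) as [|x l IH]; intros d. inversion Hin.
  simpl in Hin |- *. destruct Hin as [<-|Hin]. apply Rmax_l.
  eapply Rle_trans; [apply IH; auto|apply Rmax_r].
Qed.

Definition Ff m (tau b : nat -> R) u := sum_n_m (fun j => b j / sqrt (tau j - u^2)) 1 m.
Definition Df m (tau b : nat -> R) u := sum_n_m (fun j => b j / ((tau j - u^2) * sqrt (tau j - u^2))) 1 m.
Definition ph m tau b u := 1 - Ff m tau b u.

Lemma d_sq (t u : R) : u^2 < t -> is_derive (fun y => sqrt (t - y^2)) u (- u / sqrt (t - u^2)).
Proof.
  intros H. auto_derive. lra.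
  replace (t + - (u * (u * 1))) with (t - u^2) by ring.
  assert (0 < sqrt (t - u^2)) by (apply sqrt_lt_R0; lra). field. lra.
Qed.

Lemma d_isq (t u : R) : u^2 < t -> is_derive (fun y => / sqrt (t - y^2)) u (u / ((t - u^2) * sqrt (t - u^2))).
Proof.
  intros H. assert (0 < sqrt (t - u^2)) by (apply sqrt_lt_R0; lra).
  auto_derive. 
  all: try replace (t + - (u * (u * 1))) with (t - u^2) by ring.
  split. lra. split; auto. lra.
  replace (sqrt (t - u^2) * sqrt (t - u^2)) with (t - u^2) by (rewrite sqrt_sqrt; lra).
  field. lra.
Qed.

Lemma psi_derive m tau b u : (forall j, (1 <= j <= m)%nat -> u^2 < tau j) ->
  is_derive (psi m tau b) u (u * ph m tau b u).
Proof.
  intros H. unfold psi, ph, Ff.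
  apply isd_ext with (fun y => y^2/2 + sum_n_m (fun j => b j * sqrt (tau j - y^2)) 1 m)
   (u + sum_n_m (fun j => b j * (- u / sqrt (tau j - u^2))) 1 m). reflexivity.
  transitivity (u + (-u) * sum_n_m (fun j => b j / sqrt (tau j - u^2)) 1 m).
  { f_equal. rewrite <- sum1_scal. apply sum1_ext; intros; unfold Rdiv; rring. } 
  { match goal with |- ?a = ?b => change (@eq R a b) end. ring. }
  apply isd_plus. auto_derive; auto; field.
  apply (sum1_derive (fun j y => b j * sqrt (tau j - y^2)) (fun j x => b j * (- x / sqrt (tau j - x^2)))).
  intros j Hj. apply isd_ext with (fun y => (fun _ => b j) y * (fun y => sqrt (tau j - y^2)) y)
     (0 * sqrt (tau j - u^2) + b j * (- u / sqrt (tau j - u^2))). reflexivity. rring.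
  apply (isd_mult (fun _ => b j) (fun y => sqrt (tau j - y^2))). apply isd_const. apply d_sq. apply H; auto.
Qed.

Lemma ph_derive m tau b u : (forall j, (1 <= j <= m)%nat -> u^2 < tau j) ->
  is_derive (ph m tau b) u (- u * Df m tau b u).
Proof.
  intros H. unfold ph, Ff, Df.
  apply isd_ext with (fun y => 1 - sum_n_m (fun j => b j * / sqrt (tau j - y^2)) 1 m)
     (0 - sum_n_m (fun j => b j * (u / ((tau j - u^2) * sqrt (tau j - u^2)))) 1 m).
  reflexivity.
  transitivity (0 - u * sum_n_m (fun j => b j / ((tau j - u^2) * sqrt (tau j - u^2))) 1 m).
  { f_equal. rewrite <- sum1_scal. apply sum1_ext; intros; unfold Rdiv; rring. } rring.
  apply isd_minus. apply isd_const.
  apply (sum1_derive (fun j y => b j * / sqrt (tau j - y^2)) (fun j x => b j * (x / ((tau j - x^2) * sqrt (tau j - x^2))))).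
  intros j Hj. apply isd_ext with (fun y => (fun _ => b j) y * (fun y => / sqrt (tau j - y^2)) y)
     (0 * / sqrt (tau j - u^2) + b j * (u / ((tau j - u^2) * sqrt (tau j - u^2)))). reflexivity. rring.
  apply (isd_mult (fun _ => b j) (fun y => / sqrt (tau j - y^2))). apply isd_const. apply d_isq. apply H; auto.
Qed.

Definition Hyps (a0 : R) (chi : R -> R) m (tau b : nat -> R) (omega : R -> R) k : Prop :=
  (forall x, ex_derive chi x) /\ (forall x y, x <= y -> chi x <= chi y) /\
  (forall l, l <= 1/4 -> chi l = 0) /\ (forall l, 1/2 <= l -> chi l = 1) /\
  (1 <= m)%nat /\ (forall j, (1 <= j)%nat -> (j < m)%nat -> tau (S j) <= tau j) /\
  0 < tau m /\ (forall j, (1 <= j <= m)%nat -> 0 < b j) /\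
  (forall u, 0 < u -> ex_derive omega u) /\ (forall u, 0 < u -> Rabs (omega u) <= a0) /\
  (forall u, 0 < u -> Rabs (Derive omega u) <= a0 / u) /\ (1 <= k <= m)%nat.

Lemma tau_bounds m (tau : nat -> R) :
  (forall j, (1 <= j)%nat -> (j < m)%nat -> tau (S j) <= tau j) ->
  forall j, (1 <= j <= m)%nat -> tau m <= tau j /\ tau j <= tau 1%nat.
Proof.
  intros H j Hj. split.
  - assert (forall d, (j + d <= m)%nat -> tau (j + d)%nat <= tau j).
    { induction d; intros Hd. rewrite Nat.add_0_r; lra.
      replace (j + S d)%nat with (S (j + d)) by lia.
      eapply Rle_trans; [apply H; lia| apply IHd; lia]. }
    replace m with (j + (m - j))%nat at 1 by lia. apply H0. lia.
  - assert (forall d, (1 + d <= m)%nat -> tau (1 + d)%nat <= tau 1%nat).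
    { induction d; intros Hd. simpl; lra.
      replace (1 + S d)%nat with (S (1 + d)) by lia.
      eapply Rle_trans; [apply H; lia| apply IHd; lia]. }
    replace j with (1 + (j - 1))%nat by lia. apply H0. lia.
Qed.

Lemma chi_01 (chi : R -> R) : (forall x y, x <= y -> chi x <= chi y) ->
  (forall l, l <= 1/4 -> chi l = 0) -> (forall l, 1/2 <= l -> chi l = 1) ->
  forall x, 0 <= chi x <= 1.
Proof.
  intros Hm H0 H1 x. split.
  - destruct (Rle_dec x (1/4)). rewrite H0; lra. rewrite <- (H0 (1/4)) by lra. apply Hm; lra.
  - destruct (Rle_dec (1/2) x). rewrite H1; lra. rewrite <- (H1 (1/2)) by lra. apply Hm; lra.
Qed.

Lemma chi_dpos (chi : R -> R) : (forall x, ex_derive chi x) ->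
  (forall x y, x <= y -> chi x <= chi y) -> forall x, 0 <= Derive chi x.
Proof.
  intros Hd Hm x.
  set (pr := fun y => exist (fun l => derivable_pt_lim chi y l) (Derive chi y)
     (proj1 (is_derive_Reals _ _ _) (Derive_correct _ _ (Hd y)))).
  pose proof (nonneg_derivative_0 chi pr Hm x). exact H.
Qed.

Definition gg chi m (tau : nat -> R) (omega : R -> R) k u :=
  (1 - chi (u / sqrt (tau m))) * omega u / sqrt (tau k).
Definition dgg chi m (tau : nat -> R) (omega : R -> R) k u :=
  (- (Derive chi (u / sqrt (tau m)) / sqrt (tau m)) * omega u
    + (1 - chi (u / sqrt (tau m))) * Derive omega u) / sqrt (tau k).

Lemma gg_derive a0 chi m tau b omega k u : Hyps a0 chi m tau b omega k -> 0 < u ->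
  is_derive (gg chi m tau omega k) u (dgg chi m tau omega k u).
Proof.
  intros H Hu. destruct H as (Hc & _ & _ & _ & _ & _ & HT & _ & Ho & _).
  assert (0 < sqrt (tau m)) by (apply sqrt_lt_R0; lra).
  unfold gg, dgg.
  apply isd_ext with (fun y => ((fun y => 1 - chi (y / sqrt (tau m))) y * omega y) * (fun _ => / sqrt (tau k)) y)
   (((/ sqrt (tau m) * Derive chi (u / sqrt (tau m)) * -1) * omega u + (1 - chi (u / sqrt (tau m))) * Derive omega u) * / sqrt (tau k)
     + ((1 - chi (u / sqrt (tau m))) * omega u) * 0).
  intros; unfold Rdiv; ring. unfold Rdiv; rring.
  apply (isd_mult (fun y => (1 - chi (y / sqrt (tau m))) * omega y) (fun _ => / sqrt (tau k))); [|apply isd_const].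
  apply (isd_mult (fun y => 1 - chi (y / sqrt (tau m))) omega).
  - apply isd_ext with (fun y => 1 - (fun y => chi (y / sqrt (tau m))) y) (0 - / sqrt (tau m) * Derive chi (u / sqrt (tau m))).
    reflexivity. rring. apply (isd_minus (fun _ => 1) (fun y => chi (y / sqrt (tau m)))). apply isd_const.
    apply (isd_comp chi (fun y => y / sqrt (tau m))). apply Derive_correct; auto.
    apply isd_ext with (fun y => y * / sqrt (tau m)) (1 * / sqrt (tau m) + u * 0). reflexivity. rring.
    apply (isd_mult (fun y => y) (fun _ => / sqrt (tau m))). apply isd_id. apply isd_const.
  - apply Derive_correct; auto.
Qed.

Lemma good_u m (tau : nat -> R) u :
  (forall j, (1 <= j)%nat -> (j < m)%nat -> tau (S j) <= tau j) -> 0 < tau m ->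
  0 <= u < sqrt (tau m) -> forall j, (1 <= j <= m)%nat -> u^2 < tau j.
Proof.
  intros Hd HT Hu j Hj. destruct (tau_bounds m tau Hd j Hj).
  assert (u^2 < tau m). { rewrite <- (sqrt_sqrt (tau m)) by lra. simpl. rewrite Rmult_1_r.
    apply Rmult_le_0_lt_compat; lra. } lra.
Qed.

Lemma Df_nonneg m (tau b : nat -> R) u :
  (forall j, (1 <= j <= m)%nat -> 0 < b j) -> (forall j, (1 <= j <= m)%nat -> u^2 < tau j) ->
  0 <= Df m tau b u.
Proof.
  intros Hb Hg. apply sum1_nonneg. intros j Hj.
  specialize (Hb j Hj). specialize (Hg j Hj).
  assert (0 < sqrt (tau j - u^2)) by (apply sqrt_lt_R0; lra).
  apply Rlt_le. apply Rdiv_lt_0_compat; auto. apply Rmult_lt_0_compat; lra.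
Qed.

Lemma gg_bound a0 chi m tau b omega k u : Hyps a0 chi m tau b omega k -> 0 < u ->
  Rabs (gg chi m tau omega k u) <= a0 / sqrt (tau k).
Proof.
  intros H Hu. pose proof H as (Hc & Hm & H0 & H1 & Hm1 & Hd & HT & Hb & Ho & Hob & Hod & Hk).
  destruct (tau_bounds m tau Hd k Hk).
  assert (0 < sqrt (tau k)) by (apply sqrt_lt_R0; lra).
  pose proof (chi_01 chi Hm H0 H1 (u / sqrt (tau m))).
  unfold gg, Rdiv. rewrite !Rabs_mult, Rabs_inv, (Rabs_right (sqrt (tau k))) by lra.
  apply Rmult_le_compat_r. apply Rlt_le, Rinv_0_lt_compat; lra.
  rewrite <- (Rmult_1_l a0). apply Rmult_le_compat; try apply Rabs_pos.
  rewrite Rabs_right; lra. apply Hob; auto.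
Qed.

Lemma dgg_bound a0 chi m tau b omega k u : Hyps a0 chi m tau b omega k -> 0 < u ->
  Rabs (dgg chi m tau omega k u) <= a0 / sqrt (tau k) * (/ sqrt (tau m) * Derive chi (u / sqrt (tau m)) + / u).
Proof.
  intros H Hu. pose proof H as (Hc & Hm & H0 & H1 & Hm1 & Hd & HT & Hb & Ho & Hob & Hod & Hk).
  destruct (tau_bounds m tau Hd k Hk).
  assert (0 < sqrt (tau k)) by (apply sqrt_lt_R0; lra).
  assert (0 < sqrt (tau m)) by (apply sqrt_lt_R0; lra).
  pose proof (chi_01 chi Hm H0 H1 (u / sqrt (tau m))).
  pose proof (chi_dpos chi Hc Hm (u / sqrt (tau m))).
  assert (Ha0 : 0 <= a0) by (eapply Rle_trans; [apply Rabs_pos| apply (Hob u Hu)]).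
  unfold dgg.
  replace (a0 / sqrt (tau k) * (/ sqrt (tau m) * Derive chi (u / sqrt (tau m)) + / u))
    with ((Derive chi (u / sqrt (tau m)) / sqrt (tau m) * a0 + 1 * (a0 / u)) / sqrt (tau k)) by (field; lra).
  unfold Rdiv at 1. unfold Rdiv at 4. rewrite Rabs_mult, Rabs_inv, (Rabs_right (sqrt (tau k))) by lra.
  apply Rmult_le_compat_r. apply Rlt_le, Rinv_0_lt_compat; lra.
  eapply Rle_trans. apply Rabs_triang. apply Rplus_le_compat.
  - rewrite Rabs_mult, Rabs_Ropp. apply Rmult_le_compat; try apply Rabs_pos.
    rewrite Rabs_right. lra. apply Rle_ge. apply Rdiv_le_0_compat; lra. apply Hob; auto.
  - rewrite Rabs_mult. apply Rmult_le_compat; try apply Rabs_pos.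
    rewrite Rabs_right; lra. apply Hod; auto.
Qed.

Lemma psi_cont m tau b u : (forall j, (1 <= j <= m)%nat -> u^2 < tau j) -> continuous (psi m tau b) u.
Proof. intros H. apply (@ex_derive_continuous R_AbsRing R_NormedModule). eexists. apply psi_derive; auto. Qed.

Lemma piece (CC SS : R -> R) a0 chi m tau b omega k a bb lam (W dW : R -> R) :
  Hyps a0 chi m tau b omega k ->
  (forall t, is_derive SS t (CC t)) -> (forall t, continuous CC t) -> (forall t, Rabs (SS t) <= 1) ->
  0 < a -> a <= bb -> bb <= sqrt (tau m) / 2 -> 0 < lam ->
  (forall u, a <= u <= bb -> is_derive W u (dW u)) ->
  (forall u, a <= u <= bb -> lam <= Rabs (ph m tau b u)) ->
  (forall u, a <= u <= bb -> / (u * Rabs (ph m tau b u)) <= dW u) ->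
  ((forall u, a <= u <= bb -> 0 < ph m tau b u) \/ (forall u, a <= u <= bb -> ph m tau b u < 0)) ->
  ex_RInt (fun u => gg chi m tau omega k u * u * CC (psi m tau b u)) a bb /\
  Rabs (RInt (fun u => gg chi m tau omega k u * u * CC (psi m tau b u)) a bb)
    <= a0 / sqrt (tau k) * (4 / lam + (W bb - W a)).
Proof.
  intros H HS HC HS1 Ha Hab Hb Hlam HW Hph HdW Hsign.
  pose proof H as (Hc & Hm & H0 & H1 & Hm1 & Hd & HT & Hbpos & Ho & Hob & Hod & Hk).
  destruct (tau_bounds m tau Hd k Hk) as [HKT HK1].
  assert (HsK : 0 < sqrt (tau k)) by (apply sqrt_lt_R0; lra).
  assert (HsT : 0 < sqrt (tau m)) by (apply sqrt_lt_R0; lra).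
  assert (Ha0 : 0 <= a0) by (eapply Rle_trans; [apply Rabs_pos| apply (Hob a Ha)]).
  set (A := a0 / sqrt (tau k)).
  assert (HA : 0 <= A) by (apply Rdiv_le_0_compat; lra).
  set (g := gg chi m tau omega k). set (dg := dgg chi m tau omega k).
  set (P := ph m tau b). set (D := Df m tau b). set (ps := psi m tau b).
  assert (Hgood : forall u, a <= u <= bb -> forall j, (1 <= j <= m)%nat -> u^2 < tau j).
  { intros u Hu. apply good_u; auto. lra. }
  assert (HP0 : forall u, a <= u <= bb -> P u <> 0).
  { intros u Hu Hz. specialize (Hph u Hu). fold P in Hph. rewrite Hz, Rabs_R0 in Hph. lra. }
  destruct (ibp_core (fun u => g u * u * CC (ps u))
     (fun u => g u * SS (ps u) * / P u)
     (fun u => A * (chi (u / sqrt (tau m)) / lam + W u + / P u))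
     (fun u => (dg u * SS (ps u) + g u * ((u * P u) * CC (ps u))) * / P u
               + g u * SS (ps u) * (- (- u * D u) / P u ^ 2))
     (fun u => A * ((/ sqrt (tau m) * Derive chi (u / sqrt (tau m))) / lam + dW u + (- (- u * D u) / P u ^ 2)))
     0 (sqrt (tau m)) a bb) as [Hex Hbound]; auto.
  - lra.
  - intros u Hu.
    assert (Hg : forall j, (1 <= j <= m)%nat -> u^2 < tau j) by (apply good_u; auto; lra).
    apply (continuous_mult (fun y => g y * y) (fun y => CC (ps y))).
    apply (continuous_mult g (fun y => y)).
    apply (@ex_derive_continuous R_AbsRing R_NormedModule). eexists. apply (gg_derive a0 chi m tau b omega k u); auto. lra.
    apply continuous_id.
    apply (continuous_comp ps CC). apply psi_cont; auto. apply HC.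
  - intros u Hu.
    apply (isd_mult (fun y => g y * SS (ps y)) (fun y => / P y)).
    apply (isd_mult g (fun y => SS (ps y))).
    apply (gg_derive a0 chi m tau b omega k u); auto; lra.
    apply (isd_comp SS ps). apply HS. apply psi_derive; auto.
    apply isd_inv. apply ph_derive; auto. apply HP0; auto.
  - intros u Hu.
    apply isd_ext with (fun y => A * (fun y => chi (y / sqrt (tau m)) / lam + W y + / P y) y)
       (0 * (fun y => chi (y / sqrt (tau m)) / lam + W y + / P y) u +
        A * ((/ sqrt (tau m) * Derive chi (u / sqrt (tau m))) / lam + dW u + (- (- u * D u) / P u ^ 2))).
    reflexivity. rring.
    apply (isd_mult (fun _ => A) (fun y => chi (y / sqrt (tau m)) / lam + W y + / P y)). apply isd_const.
    apply (isd_plus (fun y => chi (y / sqrt (tau m)) / lam + W y) (fun y => / P y)).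
    apply (isd_plus (fun y => chi (y / sqrt (tau m)) / lam) W).
    apply isd_ext with (fun y => (fun y => chi (y / sqrt (tau m))) y * (fun _ => / lam) y)
      ((/ sqrt (tau m) * Derive chi (u / sqrt (tau m))) * / lam + chi (u / sqrt (tau m)) * 0).
    reflexivity. unfold Rdiv; rring.
    apply (isd_mult (fun y => chi (y / sqrt (tau m))) (fun _ => / lam)); [|apply isd_const].
    apply (isd_comp chi (fun y => y / sqrt (tau m))). apply Derive_correct; auto.
    apply isd_ext with (fun y => y * / sqrt (tau m)) (1 * / sqrt (tau m) + u * 0). reflexivity. rring.
    apply (isd_mult (fun y => y) (fun _ => / sqrt (tau m))). apply isd_id. apply isd_const.
    apply HW; auto.
    apply isd_inv. apply ph_derive; auto. apply HP0; auto.
  - intros u Hu.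
    assert (Hu0 : 0 < u) by lra.
    assert (HPu := HP0 u Hu).
    assert (HPl := Hph u Hu). fold P in HPl.
    assert (HD : 0 <= D u) by (apply Df_nonneg; auto).
    assert (Hpa : 0 < Rabs (P u)) by lra.
    assert (HP2 : 0 < P u ^ 2) by (apply pow2_gt_0; auto).
    replace ((dg u * SS (ps u) + g u * (u * P u * CC (ps u))) * / P u +
      g u * SS (ps u) * (- (- u * D u) / P u ^ 2) - g u * u * CC (ps u))
     with (dg u * SS (ps u) * / P u + g u * SS (ps u) * (u * D u / P u ^ 2)) by (field; auto).
    eapply Rle_trans. apply Rabs_triang.
    assert (Hdg := dgg_bound a0 chi m tau b omega k u H Hu0). fold dg A in Hdg.
    assert (Hgb := gg_bound a0 chi m tau b omega k u H Hu0). fold g A in Hgb.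
    assert (Hdc := chi_dpos chi Hc Hm (u / sqrt (tau m))).
    assert (HSu := HS1 (ps u)).
    assert (HdWu := HdW u Hu). fold P in HdWu.
    assert (E1 : Rabs (dg u * SS (ps u) * / P u) <= A * ((/ sqrt (tau m) * Derive chi (u / sqrt (tau m))) / lam + dW u)).
    { rewrite !Rabs_mult, Rabs_inv.
      apply Rle_trans with (Rabs (dg u) * / Rabs (P u)).
      { rewrite <- (Rmult_1_r (Rabs (dg u))) at 2. apply Rmult_le_compat_r.
        apply Rlt_le, Rinv_0_lt_compat; auto. apply Rmult_le_compat_l; auto. apply Rabs_pos. }
      apply Rle_trans with (A * (/ sqrt (tau m) * Derive chi (u / sqrt (tau m)) + / u) * / Rabs (P u)).
      { apply Rmult_le_compat_r; auto. apply Rlt_le, Rinv_0_lt_compat; auto. }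
      rewrite Rmult_assoc. apply Rmult_le_compat_l; auto.
      rewrite Rmult_plus_distr_r. apply Rplus_le_compat.
      - unfold Rdiv. apply Rmult_le_compat_l.
        apply Rmult_le_pos; auto. apply Rlt_le, Rinv_0_lt_compat; auto.
        apply Rinv_le_contravar; auto.
      - eapply Rle_trans; [|apply HdWu]. rewrite Rinv_mult. lra. }
    assert (E2 : Rabs (g u * SS (ps u) * (u * D u / P u ^ 2)) <= A * (- (- u * D u) / P u ^ 2)).
    { replace (- (- u * D u) / P u ^ 2) with (u * D u / P u ^ 2) by (field; auto).
      rewrite !Rabs_mult. rewrite (Rabs_right (u * D u / P u ^ 2)).
      apply Rmult_le_compat_r.
      apply Rdiv_le_0_compat. apply Rmult_le_pos; lra. exact HP2.
      rewrite <- (Rmult_1_r A). apply Rmult_le_compat; auto; apply Rabs_pos.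
      apply Rle_ge, Rdiv_le_0_compat. apply Rmult_le_pos; lra. exact HP2. }
    lra.
  -
    assert (Hab' : a <= a <= bb) by lra. assert (Hbb' : a <= bb <= bb) by lra.
    assert (HQ : forall u, a <= u <= bb -> Rabs (g u * SS (ps u) * / P u) <= A / lam).
    { intros u Hu. assert (Hgb := gg_bound a0 chi m tau b omega k u H ltac:(lra)). fold g A in Hgb.
      assert (HPl := Hph u Hu). fold P in HPl.
      rewrite !Rabs_mult, Rabs_inv. unfold Rdiv.
      apply Rmult_le_compat. apply Rmult_le_pos; apply Rabs_pos. apply Rlt_le, Rinv_0_lt_compat; lra.
      rewrite <- (Rmult_1_r A). apply Rmult_le_compat; auto; apply Rabs_pos.
      apply Rinv_le_contravar; lra. }
    assert (Hch : chi (bb / sqrt (tau m)) - chi (a / sqrt (tau m)) <= 1).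
    { pose proof (chi_01 chi Hm H0 H1 (bb / sqrt (tau m))). pose proof (chi_01 chi Hm H0 H1 (a / sqrt (tau m))). lra. }
    assert (Hinv : / P bb - / P a <= / lam).
    { assert (HPa := Hph a Hab'). assert (HPb := Hph bb Hbb'). fold P in HPa, HPb.
      destruct Hsign as [Hs|Hs].
      - assert (Ha' := Hs a Hab'). assert (Hb' := Hs bb Hbb'). fold P in Ha', Hb'.
        rewrite Rabs_right in HPb by lra.
        assert (0 < / P a) by (apply Rinv_0_lt_compat; auto).
        assert (/ P bb <= / lam) by (apply Rinv_le_contravar; lra). lra.
      - assert (Ha' := Hs a Hab'). assert (Hb' := Hs bb Hbb'). fold P in Ha', Hb'.
        rewrite Rabs_left in HPa by lra.
        assert (/ P bb < 0) by (apply Rinv_lt_0_compat; auto).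
        assert (/ (- P a) <= / lam) by (apply Rinv_le_contravar; lra).
        rewrite <- Ropp_inv_permute in H3 by lra. lra. }
    assert (HQa := HQ a Hab'). assert (HQb := HQ bb Hbb').
    split; auto.
    eapply Rle_trans. apply Hbound.
    assert (A * (chi (bb / sqrt (tau m)) / lam + W bb + / P bb) - A * (chi (a / sqrt (tau m)) / lam + W a + / P a)
      = A * ((chi (bb / sqrt (tau m)) - chi (a / sqrt (tau m))) / lam + (W bb - W a) + (/ P bb - / P a))) by (unfold Rdiv; ring).
    rewrite H2.
    assert ((chi (bb / sqrt (tau m)) - chi (a / sqrt (tau m))) / lam <= / lam).
    { unfold Rdiv. rewrite <- (Rmult_1_l (/ lam)) at 2. apply Rmult_le_compat_r; auto. apply Rlt_le, Rinv_0_lt_compat; auto. }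
    assert (A * ((chi (bb / sqrt (tau m)) - chi (a / sqrt (tau m))) / lam + (W bb - W a) + (/ P bb - / P a))
      <= A * (/ lam + (W bb - W a) + / lam)) by (apply Rmult_le_compat_l; auto; lra).
    unfold Rdiv in *. lra.
Qed.

Definition pp (CC : R -> R) chi m tau b omega k u :=
  gg chi m tau omega k u * u * CC (psi m tau b u).
Definition p0 (f : R -> R) u := if Rle_dec u 0 then 0 else f u.

Lemma pp_bound CC a0 chi m tau b omega k u : Hyps a0 chi m tau b omega k ->
  (forall t, Rabs (CC t) <= 1) -> 0 < u -> Rabs (pp CC chi m tau b omega k u) <= a0 / sqrt (tau k) * u.
Proof.
  intros H HC Hu. unfold pp. rewrite !Rabs_mult. rewrite (Rabs_right u) by lra.
  rewrite <- (Rmult_1_r (a0 / sqrt (tau k) * u)). apply Rmult_le_compat; try apply Rabs_pos.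
  apply Rmult_le_pos; [apply Rabs_pos|lra]. apply Rmult_le_compat_r. lra. apply (gg_bound a0 chi m tau b omega k u H Hu).
  auto.
Qed.

Lemma pp_cont CC a0 chi m tau b omega k u : Hyps a0 chi m tau b omega k ->
  (forall t, continuous CC t) -> 0 < u < sqrt (tau m) -> continuous (pp CC chi m tau b omega k) u.
Proof.
  intros H HC Hu. pose proof H as (Hc & Hm & H0 & H1 & Hm1 & Hd & HT & Hbpos & Ho & Hob & Hod & Hk).
  assert (Hg : forall j, (1 <= j <= m)%nat -> u^2 < tau j) by (apply good_u; auto; lra).
  unfold pp.
  apply (continuous_mult (fun y => gg chi m tau omega k y * y) (fun y => CC (psi m tau b y))).
  apply (continuous_mult (gg chi m tau omega k) (fun y => y)).
  apply (@ex_derive_continuous R_AbsRing R_NormedModule). eexists. apply (gg_derive a0 chi m tau b omega k u); auto. lra.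
  apply continuous_id.
  apply (continuous_comp (psi m tau b) CC). apply psi_cont; auto. apply HC.
Qed.

Lemma p0_cont CC a0 chi m tau b omega k u : Hyps a0 chi m tau b omega k ->
  (forall t, continuous CC t) -> (forall t, Rabs (CC t) <= 1) -> 0 <= u < sqrt (tau m) ->
  continuous (p0 (pp CC chi m tau b omega k)) u.
Proof.
  intros H HC HC1 Hu.
  destruct (Req_dec u 0) as [->|Hu0].
  - pose proof H as (Hc & Hm & H0 & H1 & Hm1 & Hd & HT & Hbpos & Ho & Hob & Hod & Hk).
    destruct (tau_bounds m tau Hd k Hk).
    assert (HsK : 0 < sqrt (tau k)) by (apply sqrt_lt_R0; lra).
    assert (Ha0 : 0 <= a0) by (eapply Rle_trans; [apply Rabs_pos| apply (Hob 1 Rlt_0_1)]).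
    set (A := a0 / sqrt (tau k)). assert (0 <= A) by (apply Rdiv_le_0_compat; lra).
    unfold continuous. apply filterlim_locally. intros eps.
    assert (Hd' : 0 < eps / (A + 1)) by (apply Rdiv_lt_0_compat; [apply cond_pos| lra]).
    exists (mkposreal _ Hd'). intros y0 Hy. set (y := (y0 : R)) in *.
    unfold ball in Hy |- *; simpl in Hy |- *; unfold AbsRing_ball, abs, minus, plus, opp in Hy |- *; simpl in Hy |- *.
    unfold p0. destruct (Rle_dec 0 0); [|lra]. rewrite Ropp_0, Rplus_0_r in Hy |- *.
    destruct (Rle_dec y 0). rewrite Rabs_R0; apply cond_pos.
    assert (Hp := pp_bound CC a0 chi m tau b omega k y H HC1 ltac:(lra)). fold A in Hp.
    rewrite Rabs_right in Hy by lra.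
    apply Rle_lt_trans with (A * y). exact Hp.
    apply Rle_lt_trans with ((A + 1) * y). nra.
    apply Rmult_lt_reg_r with (/ (A + 1)). apply Rinv_0_lt_compat; lra.
    replace ((A + 1) * y * / (A + 1)) with y by (field; lra). exact Hy.
  - assert (0 < u) by lra.
    apply continuous_ext_loc with (pp CC chi m tau b omega k).
    exists (mkposreal _ H0). intros y Hy.
    unfold ball in Hy; simpl in Hy; unfold AbsRing_ball, abs, minus, plus, opp in Hy; simpl in Hy.
    apply Rabs_def2 in Hy. unfold p0. destruct (Rle_dec y 0); [lra|auto].
    apply pp_cont with a0; auto. lra.
Qed.

Lemma triv CC a0 chi m tau b omega k c d : Hyps a0 chi m tau b omega k ->
  (forall t, continuous CC t) -> (forall t, Rabs (CC t) <= 1) -> 0 <= c <= d -> d < sqrt (tau m) ->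
  ex_RInt (p0 (pp CC chi m tau b omega k)) c d /\
  Rabs (RInt (p0 (pp CC chi m tau b omega k)) c d) <= a0 / sqrt (tau k) * (d^2 - c^2).
Proof.
  intros H HC HC1 Hcd Hd.
  pose proof H as (Hc & Hm & H0 & H1 & Hm1 & Hdd & HT & Hbpos & Ho & Hob & Hod & Hk).
  destruct (tau_bounds m tau Hdd k Hk).
  assert (HsK : 0 < sqrt (tau k)) by (apply sqrt_lt_R0; lra).
  assert (Ha0 : 0 <= a0) by (eapply Rle_trans; [apply Rabs_pos| apply (Hob 1 Rlt_0_1)]).
  set (A := a0 / sqrt (tau k)). assert (0 <= A) by (apply Rdiv_le_0_compat; lra).
  assert (Hex : ex_RInt (p0 (pp CC chi m tau b omega k)) c d).
  { apply (@ex_RInt_continuous R_CompleteNormedModule). intros z Hz.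
    rewrite Rmin_left, Rmax_right in Hz by lra. apply p0_cont with a0; auto. lra. }
  split; auto.
  eapply Rle_trans. apply abs_RInt_le_const with (M := A * d). lra. exact Hex.
  intros t Ht. unfold p0. destruct (Rle_dec t 0). rewrite Rabs_R0. apply Rmult_le_pos; lra.
  eapply Rle_trans. apply (pp_bound CC a0 chi m tau b omega k t H HC1). lra. fold A. apply Rmult_le_compat_l; lra.
  assert (0 <= A * (d - c) * c) by (apply Rmult_le_pos; [apply Rmult_le_pos|]; lra).
  replace (A * (d^2 - c^2)) with ((d - c) * (A * d) + A * (d - c) * c) by ring. lra.
Qed.

Lemma ln_le' x y : 0 < x -> x <= y -> ln x <= ln y.
Proof. intros. destruct (Req_dec x y). subst; lra. apply Rlt_le, ln_increasing; lra. Qed.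

Lemma ln_sub1 y : 0 < y -> ln y <= y - 1.
Proof. intros. pose proof (exp_ineq1_le (ln y)). rewrite exp_ln in H0; lra. Qed.

Lemma inv_min a b : 0 < a -> 0 < b -> / Rmin a b <= / a + / b.
Proof.
  intros. apply Rmin_case.
  assert (0 < / b) by (apply Rinv_0_lt_compat; auto). lra.
  assert (0 < / a) by (apply Rinv_0_lt_compat; auto). lra.
Qed.

Lemma sqrt_lam nu : 0 < nu -> nu * / sqrt nu = sqrt nu /\ nu * (/ sqrt nu)^2 = 1.
Proof.
  intros H. assert (0 < sqrt nu) by (apply sqrt_lt_R0; auto).
  pose proof (sqrt_sqrt nu (Rlt_le _ _ H)).
  split. rewrite <- H1 at 1. field. lra. rewrite <- H1 at 1. field. lra.
Qed.

Lemma dW_bound (P nu z u : R) : 0 < u -> 0 < nu -> 0 < z -> 0 < Rmin (1/2) (nu * z) <= Rabs P ->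
  / (u * Rabs P) <= 2 / u + / (nu * u * z).
Proof.
  intros Hu Hn Hz [Hm HP].
  assert (H1 : / Rabs P <= / Rmin (1/2) (nu * z)) by (apply Rinv_le_contravar; lra).
  assert (H2 := inv_min (1/2) (nu * z) ltac:(lra) ltac:(apply Rmult_lt_0_compat; lra)).
  rewrite Rinv_mult.
  replace (2 / u + / (nu * u * z)) with (/ u * (/ (1/2) + / (nu * z))) by (field; repeat split; lra).
  apply Rmult_le_compat_l. apply Rlt_le, Rinv_0_lt_compat; lra. lra.
Qed.

Lemma sqrt_nu_le nu : 0 < nu <= 1/4 -> 0 < sqrt nu <= 1/2.
Proof.
  intros H. split. apply sqrt_lt_R0; lra.
  destruct (Rle_dec (sqrt nu) (1/2)); auto.
  pose proof (sqrt_sqrt nu ltac:(lra)). nra.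
Qed.

Lemma sq_le_sq a b : 0 <= a -> a <= b -> a^2 <= b^2.
Proof. intros. nra. Qed.

Lemma left_piece CC SS a0 chi m tau b omega k u0 nu c2 :
  Hyps a0 chi m tau b omega k ->
  (forall t, is_derive SS t (CC t)) -> (forall t, continuous CC t) -> (forall t, Rabs (SS t) <= 1) ->
  0 < nu <= 1/4 -> 0 <= u0 ->
  / sqrt nu < c2 -> c2 <= u0^2 - / sqrt nu -> c2 <= (sqrt (tau m) / 2)^2 ->
  (forall u, 0 < u <= sqrt (tau m) / 2 -> Rmin (1/2) (nu * Rabs (u^2 - u0^2)) <= Rabs (ph m tau b u)) ->
  (forall u, 0 < u <= sqrt (tau m) / 2 -> u < u0 -> 0 <= ph m tau b u) ->
  ex_RInt (pp CC chi m tau b omega k) (sqrt (/ sqrt nu)) (sqrt c2) /\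
  Rabs (RInt (pp CC chi m tau b omega k) (sqrt (/ sqrt nu)) (sqrt c2))
    <= a0 / sqrt (tau k) * (5 * / sqrt nu + ln c2).
Proof.
  intros H HS HC HS1 Hnu Hu0 Hc2a Hc2b Hc2L Hmin Hsgn.
  pose proof H as (Hc & Hm & H0 & H1 & Hm1 & Hd & HT & Hbpos & Ho & Hob & Hod & Hk).
  destruct (tau_bounds m tau Hd k Hk).
  assert (HsK : 0 < sqrt (tau k)) by (apply sqrt_lt_R0; lra).
  assert (HsT : 0 < sqrt (tau m)) by (apply sqrt_lt_R0; lra).
  assert (Ha0 : 0 <= a0) by (eapply Rle_trans; [apply Rabs_pos| apply (Hob 1 Rlt_0_1)]).
  set (A := a0 / sqrt (tau k)). assert (HA : 0 <= A) by (apply Rdiv_le_0_compat; lra).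
  destruct (sqrt_nu_le nu Hnu) as [Hsn1 Hsn2].
  destruct (sqrt_lam nu ltac:(lra)) as [Hl1 Hl2].
  set (r := / sqrt nu) in *. set (x0 := u0^2) in *. set (L := sqrt (tau m) / 2) in *.
  assert (Hr2 : 2 <= r). { unfold r. replace 2 with (/ (1/2)) by field. apply Rinv_le_contravar; lra. }
  assert (HL : 0 < L) by (unfold L; lra).
  set (a := sqrt r). set (bb := sqrt c2).
  assert (Ha : 0 < a) by (apply sqrt_lt_R0; lra).
  assert (Ha2 : a^2 = r) by (apply pow2_sqrt; lra).
  assert (Hb2 : bb^2 = c2) by (apply pow2_sqrt; lra).
  assert (Hab : a <= bb) by (apply sqrt_le_1_alt; lra).
  assert (HbL : bb <= L). { unfold bb. rewrite <- (sqrt_pow2 L) by lra. apply sqrt_le_1_alt; lra. }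
  assert (Hu2 : forall u, a <= u <= bb -> r <= u^2 <= c2).
  { intros u Hu. rewrite <- Ha2, <- Hb2. split; apply sq_le_sq; lra. }
  assert (Hx0 : 0 < x0) by lra.
  destruct (piece CC SS a0 chi m tau b omega k a bb (sqrt nu)
     (fun u => ln (u^2) + / (2 * nu * x0) * (ln (u^2) - ln (x0 - u^2)))
     (fun u => 2 / u + / (nu * u * (x0 - u^2)))) as [Hex Hbd]; auto.
  - intros u Hu. specialize (Hu2 u Hu). auto_derive. repeat split; nra.
    field. repeat split; try lra; nra.
  - intros u Hu. specialize (Hu2 u Hu).
    eapply Rle_trans; [|apply Hmin; lra].
    apply Rmin_glb. lra. rewrite Rabs_left by lra. rewrite <- Hl1. apply Rmult_le_compat_l; lra.
  - intros u Hu. specialize (Hu2 u Hu).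
    replace (x0 - u^2) with (Rabs (u^2 - x0)) by (rewrite Rabs_left; lra).
    apply dW_bound. lra. lra. apply Rabs_pos_lt; lra.
    split. apply Rmin_glb_lt. lra. apply Rmult_lt_0_compat. lra. apply Rabs_pos_lt; lra.
    apply Hmin; lra.
  - left. intros u Hu. specialize (Hu2 u Hu).
    assert (Hlt : u < u0). { destruct (Rlt_dec u u0); auto. assert (u0^2 <= u^2) by (apply sq_le_sq; lra). unfold x0 in *. lra. }
    assert (Hp := Hsgn u ltac:(lra) Hlt).
    assert (Hq : sqrt nu <= Rabs (ph m tau b u)).
    { eapply Rle_trans; [|apply Hmin; lra]. apply Rmin_glb. lra. rewrite Rabs_left by lra.
      rewrite <- Hl1. apply Rmult_le_compat_l; lra. }
    rewrite Rabs_right in Hq by lra. lra.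
  - split; auto. eapply Rle_trans. apply Hbd. fold A. apply Rmult_le_compat_l; auto.
    rewrite Ha2, Hb2.
    assert (Hlnr : 0 <= ln r) by (rewrite <- ln_1; apply ln_le'; lra).
    assert (E1 : ln c2 <= ln x0) by (apply ln_le'; lra).
    assert (E2 : ln r <= ln (x0 - c2)) by (apply ln_le'; lra).
    assert (E3 : ln (x0 - r) <= ln x0) by (apply ln_le'; lra).
    assert (E4 : ln x0 - ln r <= x0 / r).
    { replace (ln x0 - ln r) with (ln (x0 * / r)) by (rewrite ln_mult, ln_Rinv; try apply Rinv_0_lt_compat; lra).
      pose proof (ln_sub1 (x0 * / r) ltac:(apply Rmult_lt_0_compat; [lra|apply Rinv_0_lt_compat; lra])).
      unfold Rdiv. lra. }
    assert (E5 : / (2 * nu * x0) * (ln c2 - ln (x0 - c2) - (ln r - ln (x0 - r))) <= r).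
    { apply Rle_trans with (/ (2 * nu * x0) * (2 * (x0 / r))).
      apply Rmult_le_compat_l. apply Rlt_le, Rinv_0_lt_compat. apply Rmult_lt_0_compat; lra. lra.
      replace (/ (2 * nu * x0) * (2 * (x0 / r))) with (/ (nu * r^2) * r) by (field; repeat split; lra).
      rewrite Hl2. lra. }
    rewrite Rmult_minus_distr_l in E5.
    replace (4 / sqrt nu) with (4 * r) by (unfold r, Rdiv; ring).
    lra.
Qed.

Lemma right_piece CC SS a0 chi m tau b omega k u0 nu :
  Hyps a0 chi m tau b omega k ->
  (forall t, is_derive SS t (CC t)) -> (forall t, continuous CC t) -> (forall t, Rabs (SS t) <= 1) ->
  0 < nu <= 1/4 -> 0 <= u0 ->
  u0^2 + / sqrt nu < (sqrt (tau m) / 2)^2 ->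
  (forall u, 0 < u <= sqrt (tau m) / 2 -> Rmin (1/2) (nu * Rabs (u^2 - u0^2)) <= Rabs (ph m tau b u)) ->
  (forall u, 0 < u <= sqrt (tau m) / 2 -> u0 < u -> ph m tau b u <= 0) ->
  ex_RInt (pp CC chi m tau b omega k) (sqrt (u0^2 + / sqrt nu)) (sqrt (tau m) / 2) /\
  Rabs (RInt (pp CC chi m tau b omega k) (sqrt (u0^2 + / sqrt nu)) (sqrt (tau m) / 2))
    <= a0 / sqrt (tau k) * (5 * / sqrt nu + ln ((sqrt (tau m) / 2)^2)).
Proof.
  intros H HS HC HS1 Hnu Hu0 Hc3 Hmin Hsgn.
  pose proof H as (Hc & Hm & H0 & H1 & Hm1 & Hd & HT & Hbpos & Ho & Hob & Hod & Hk).
  destruct (tau_bounds m tau Hd k Hk).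
  assert (HsK : 0 < sqrt (tau k)) by (apply sqrt_lt_R0; lra).
  assert (HsT : 0 < sqrt (tau m)) by (apply sqrt_lt_R0; lra).
  assert (Ha0 : 0 <= a0) by (eapply Rle_trans; [apply Rabs_pos| apply (Hob 1 Rlt_0_1)]).
  set (A := a0 / sqrt (tau k)). assert (HA : 0 <= A) by (apply Rdiv_le_0_compat; lra).
  destruct (sqrt_nu_le nu Hnu) as [Hsn1 Hsn2].
  destruct (sqrt_lam nu ltac:(lra)) as [Hl1 Hl2].
  set (r := / sqrt nu) in *. set (x0 := u0^2) in *. set (L := sqrt (tau m) / 2) in *.
  assert (Hr2 : 2 <= r). { unfold r. replace 2 with (/ (1/2)) by field. apply Rinv_le_contravar; lra. }
  assert (HL : 0 < L) by (unfold L; lra).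
  assert (Hx0 : 0 <= x0) by (unfold x0; nra).
  set (a := sqrt (x0 + r)).
  assert (Ha : 0 < a) by (apply sqrt_lt_R0; lra).
  assert (Ha2 : a^2 = x0 + r) by (apply pow2_sqrt; lra).
  assert (HaL : a <= L). { unfold a. rewrite <- (sqrt_pow2 L) by lra. apply sqrt_le_1_alt; lra. }
  assert (Hu2 : forall u, a <= u <= L -> x0 + r <= u^2).
  { intros u Hu. rewrite <- Ha2. apply sq_le_sq; lra. }
  destruct (piece CC SS a0 chi m tau b omega k a L (sqrt nu)
     (fun u => ln (u^2) - / (2 * nu * (u^2 - x0)))
     (fun u => 2 / u + u / (nu * (u^2 - x0)^2))) as [Hex Hbd]; auto.
  - right; reflexivity.
  - intros u Hu. specialize (Hu2 u Hu). auto_derive. repeat split; try nra.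
    field. repeat split; try lra; nra.
  - intros u Hu. specialize (Hu2 u Hu).
    eapply Rle_trans; [|apply Hmin; lra].
    apply Rmin_glb. lra. rewrite Rabs_right by lra. rewrite <- Hl1. apply Rmult_le_compat_l; lra.
  - intros u Hu. specialize (Hu2 u Hu).
    eapply Rle_trans. apply (dW_bound _ nu (u^2 - x0) u). lra. lra. lra.
    split. apply Rmin_glb_lt. lra. apply Rmult_lt_0_compat; lra.
    assert (Hm2 := Hmin u ltac:(lra)). rewrite Rabs_right in Hm2 by lra. exact Hm2.
    apply Rplus_le_compat_l.
    replace (u / (nu * (u^2 - x0)^2)) with (u^2 / (u^2 - x0) * / (nu * u * (u^2 - x0))) by (field; repeat split; lra).
    rewrite <- (Rmult_1_l (/ (nu * u * (u ^ 2 - x0)))) at 1.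
    apply Rmult_le_compat_r. apply Rlt_le, Rinv_0_lt_compat. apply Rmult_lt_0_compat; [apply Rmult_lt_0_compat|]; lra.
    apply (Rmult_le_reg_r (u^2 - x0)). lra. unfold Rdiv. rewrite Rmult_assoc, Rinv_l by lra. lra.
  - right. intros u Hu. specialize (Hu2 u Hu).
    assert (Hlt : u0 < u). { destruct (Rlt_dec u0 u); auto. assert (u^2 <= u0^2) by (apply sq_le_sq; lra). unfold x0 in *. lra. }
    assert (Hp := Hsgn u ltac:(lra) Hlt).
    assert (Hq : sqrt nu <= Rabs (ph m tau b u)).
    { eapply Rle_trans; [|apply Hmin; lra]. apply Rmin_glb. lra. rewrite Rabs_right by lra.
      rewrite <- Hl1. apply Rmult_le_compat_l; lra. }
    rewrite Rabs_left1 in Hq by lra. lra.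
  - split; auto. eapply Rle_trans. apply Hbd. fold A. apply Rmult_le_compat_l; auto.
    rewrite Ha2. replace (x0 + r - x0) with r by ring.
    assert (E1 : 0 <= ln (x0 + r)) by (rewrite <- ln_1; apply ln_le'; lra).
    assert (E2 : 0 <= / (2 * nu * (L^2 - x0))) by (apply Rlt_le, Rinv_0_lt_compat; apply Rmult_lt_0_compat; lra).
    assert (E3 : / (2 * nu * r) = r / 2).
    { replace (/ (2 * nu * r)) with (/ (nu * r^2) * r / 2) by (field; lra). rewrite Hl2. field. }
    replace (4 / sqrt nu) with (4 * r) by (unfold r, Rdiv; ring).
    lra.
Qed.

Lemma min_cases a b : (Rmin a b = a /\ a <= b) \/ (Rmin a b = b /\ b <= a).
Proof. unfold Rmin. destruct (Rle_dec a b); [left|right]; split; auto; lra. Qed.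
Lemma max_cases a b : (Rmax a b = b /\ a <= b) \/ (Rmax a b = a /\ b <= a).
Proof. unfold Rmax. destruct (Rle_dec a b); [left|right]; split; auto; lra. Qed.

Lemma master CC SS a0 chi m tau b omega k u0 nu :
  Hyps a0 chi m tau b omega k ->
  (forall t, is_derive SS t (CC t)) -> (forall t, continuous CC t) -> (forall t, Rabs (SS t) <= 1) ->
  (forall t, Rabs (CC t) <= 1) ->
  0 < nu <= 1/4 -> 0 <= u0 <= sqrt (tau m) / 2 -> 1 <= (sqrt (tau m) / 2)^2 ->
  (forall u, 0 < u <= sqrt (tau m) / 2 -> Rmin (1/2) (nu * Rabs (u^2 - u0^2)) <= Rabs (ph m tau b u)) ->
  (forall u, 0 < u <= sqrt (tau m) / 2 -> u < u0 -> 0 <= ph m tau b u) ->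
  (forall u, 0 < u <= sqrt (tau m) / 2 -> u0 < u -> ph m tau b u <= 0) ->
  ex_RInt (p0 (pp CC chi m tau b omega k)) 0 (sqrt (tau m) / 2) /\
  Rabs (RInt (p0 (pp CC chi m tau b omega k)) 0 (sqrt (tau m) / 2))
    <= a0 / sqrt (tau k) * (13 * / sqrt nu + 2 * ln ((sqrt (tau m) / 2)^2)).
Proof.
  intros H HS HC HS1 HC1 Hnu Hu0 HX Hmin Hl Hr.
  pose proof H as (Hc & Hm & H0 & H1 & Hm1 & Hd & HT & Hbpos & Ho & Hob & Hod & Hk).
  destruct (tau_bounds m tau Hd k Hk).
  assert (HsK : 0 < sqrt (tau k)) by (apply sqrt_lt_R0; lra).
  assert (HsT : 0 < sqrt (tau m)) by (apply sqrt_lt_R0; lra).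
  assert (Ha0 : 0 <= a0) by (eapply Rle_trans; [apply Rabs_pos| apply (Hob 1 Rlt_0_1)]).
  set (A := a0 / sqrt (tau k)). assert (HA : 0 <= A) by (apply Rdiv_le_0_compat; lra).
  destruct (sqrt_nu_le nu Hnu) as [Hsn1 Hsn2].
  set (r := / sqrt nu) in *.
  assert (Hr2 : 2 <= r). { unfold r. replace 2 with (/ (1/2)) by field. apply Rinv_le_contravar; lra. }
  set (L := sqrt (tau m) / 2) in *. set (X := L^2) in *.
  assert (HL : 0 < L) by (unfold L; lra).
  assert (HLT : L < sqrt (tau m)) by (unfold L; lra).
  assert (HLX : sqrt X = L) by (unfold X; apply sqrt_pow2; lra).
  set (x0 := u0^2) in *.
  assert (Hx0 : 0 <= x0 <= X) by (unfold x0, X; split; [nra| apply sq_le_sq; lra]).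
  assert (HlnX : 0 <= ln X) by (rewrite <- ln_1; apply ln_le'; lra).
  set (c1 := Rmin r X). set (c2 := Rmin (Rmax r (x0 - r)) X). set (c3 := Rmin (x0 + r) X).
  assert (Hc1 : 0 < c1 <= r /\ c1 <= X) by (unfold c1; destruct (min_cases r X); lra).
  assert (Hc12 : c1 <= c2) by (unfold c1, c2; destruct (min_cases r X), (min_cases (Rmax r (x0 - r)) X), (max_cases r (x0 - r)); lra).
  assert (Hc23 : c2 <= c3) by (unfold c3, c2; destruct (min_cases (x0 + r) X), (min_cases (Rmax r (x0 - r)) X), (max_cases r (x0 - r)); lra).
  assert (Hc3 : c3 <= X) by (unfold c3; destruct (min_cases (x0 + r) X); lra).
  assert (Hc23' : c3 - c2 <= 2 * r) by (unfold c3, c2; destruct (min_cases (x0 + r) X), (min_cases (Rmax r (x0 - r)) X), (max_cases r (x0 - r)); lra).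
  set (u1 := sqrt c1). set (u2 := sqrt c2). set (u3 := sqrt c3).
  assert (Hu1 : 0 < u1) by (apply sqrt_lt_R0; lra).
  assert (Hu12 : u1 <= u2) by (apply sqrt_le_1_alt; lra).
  assert (Hu23 : u2 <= u3) by (apply sqrt_le_1_alt; lra).
  assert (Hu3L : u3 <= L) by (rewrite <- HLX; apply sqrt_le_1_alt; lra).
  assert (Hs1 : u1^2 = c1) by (apply pow2_sqrt; lra).
  assert (Hs2 : u2^2 = c2) by (apply pow2_sqrt; lra).
  assert (Hs3 : u3^2 = c3) by (apply pow2_sqrt; lra).
  set (f := p0 (pp CC chi m tau b omega k)).
  destruct (triv CC a0 chi m tau b omega k 0 u1 H HC HC1 ltac:(lra) ltac:(lra)) as [E1 B1].
  destruct (triv CC a0 chi m tau b omega k u1 u2 H HC HC1 ltac:(lra) ltac:(lra)) as [E2 _].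
  destruct (triv CC a0 chi m tau b omega k u2 u3 H HC HC1 ltac:(lra) ltac:(lra)) as [E3 B3].
  destruct (triv CC a0 chi m tau b omega k u3 L H HC HC1 ltac:(lra) ltac:(lra)) as [E4 _].
  fold f A in E1, B1, E2, E3, B3, E4.
  assert (Hex : ex_RInt f 0 L).
  { apply ex_RInt_Chasles with u1; auto. apply ex_RInt_Chasles with u2; auto. apply ex_RInt_Chasles with u3; auto. }
  split; auto.
  assert (Hsplit : RInt f 0 L = RInt f 0 u1 + (RInt f u1 u2 + (RInt f u2 u3 + RInt f u3 L))).
  { assert (E24 : ex_RInt f u2 L) by (apply ex_RInt_Chasles with u3; auto).
    assert (E14 : ex_RInt f u1 L) by (apply ex_RInt_Chasles with u2; auto).
    pose proof (RInt_Chasles f u2 u3 L E3 E4) as C3.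
    pose proof (RInt_Chasles f u1 u2 L E2 E24) as C2.
    pose proof (RInt_Chasles f 0 u1 L E1 E14) as C1.
    unfold plus in C1, C2, C3; simpl in C1, C2, C3. lra. }
  rewrite Hsplit.
  assert (B1' : Rabs (RInt f 0 u1) <= A * r).
  { rewrite Hs1 in B1. eapply Rle_trans; [exact B1|]. apply Rmult_le_compat_l; auto. simpl; lra. }
  assert (B3' : Rabs (RInt f u2 u3) <= A * (2 * r)).
  { rewrite Hs2, Hs3 in B3. eapply Rle_trans; [exact B3|]. apply Rmult_le_compat_l; auto. }
  assert (B2 : Rabs (RInt f u1 u2) <= A * (5 * r + ln X)).
  { destruct (Rlt_dec c1 c2) as [Hlt|Hge].
    - assert (Hc1r : c1 = r) by (unfold c1 in *; destruct (min_cases r X); lra).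
      assert (Hc2' : r < c2 /\ c2 <= x0 - r).
      { unfold c2 in *; destruct (min_cases (Rmax r (x0 - r)) X), (max_cases r (x0 - r)); lra. }
      destruct (left_piece CC SS a0 chi m tau b omega k u0 nu c2 H HS HC HS1 Hnu ltac:(lra)
                 ltac:(fold r; lra) ltac:(fold r x0; lra) ltac:(fold L X; lra) Hmin Hl) as [_ Hb].
      fold r A in Hb. unfold u1, u2. rewrite Hc1r.
      rewrite (RInt_ext f (pp CC chi m tau b omega k)).
      eapply Rle_trans. apply Hb. apply Rmult_le_compat_l; auto.
      assert (ln c2 <= ln X) by (apply ln_le'; lra). lra.
      intros x Hx. rewrite Rmin_left, Rmax_right in Hx. unfold f, p0. destruct (Rle_dec x 0); auto.
      assert (0 < sqrt r) by (apply sqrt_lt_R0; lra). lra.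
      apply sqrt_le_1_alt; lra. apply sqrt_le_1_alt; lra.
    - assert (c1 = c2) by lra. unfold u2. rewrite <- H4. fold u1. rewrite RInt_point.
      unfold zero; simpl. rewrite Rabs_R0. apply Rmult_le_pos; lra. }
  assert (B4 : Rabs (RInt f u3 L) <= A * (5 * r + ln X)).
  { destruct (Rlt_dec c3 X) as [Hlt|Hge].
    - assert (Hc3r : c3 = x0 + r) by (unfold c3 in *; destruct (min_cases (x0 + r) X); lra).
      destruct (right_piece CC SS a0 chi m tau b omega k u0 nu H HS HC HS1 Hnu ltac:(lra)
                 ltac:(fold r x0 L X; lra) Hmin Hr) as [_ Hb].
      fold r A x0 L X in Hb. unfold u3. rewrite Hc3r.
      rewrite (RInt_ext f (pp CC chi m tau b omega k)).
      exact Hb.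
      intros x Hx. rewrite Rmin_left, Rmax_right in Hx. unfold f, p0. destruct (Rle_dec x 0); auto.
      assert (0 < sqrt (x0 + r)) by (apply sqrt_lt_R0; lra). lra.
      rewrite <- Hc3r; fold u3; lra. rewrite <- Hc3r; fold u3; lra.
    - assert (c3 = X) by lra. assert (u3 = L) by (unfold u3; rewrite H4; auto).
      rewrite H5, RInt_point. unfold zero; simpl. rewrite Rabs_R0. apply Rmult_le_pos; lra. }
  eapply Rle_trans. apply Rabs_triang.
  eapply Rle_trans. apply Rplus_le_compat_l. apply Rabs_triang.
  eapply Rle_trans. apply Rplus_le_compat_l. apply Rplus_le_compat_l. apply Rabs_triang.
  replace (13 / sqrt nu) with (13 * r) by (unfold r, Rdiv; ring).
  nra.
Qed.


Lemma find_u0 m (tau b : nat -> R) nu :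
  (forall j, (1 <= j)%nat -> (j < m)%nat -> tau (S j) <= tau j) -> 0 < tau m ->
  (forall j, (1 <= j <= m)%nat -> 0 < b j) -> 0 < nu ->
  (forall v, 0 <= v <= sqrt (tau m) / 2 -> Rabs (ph m tau b v) < 1/2 -> 2 * nu <= Df m tau b v) ->
  exists u0, 0 <= u0 <= sqrt (tau m) / 2 /\
  (forall u, 0 < u <= sqrt (tau m) / 2 -> Rmin (1/2) (nu * Rabs (u^2 - u0^2)) <= Rabs (ph m tau b u)) /\
  (forall u, 0 < u <= sqrt (tau m) / 2 -> u < u0 -> 0 <= ph m tau b u) /\
  (forall u, 0 < u <= sqrt (tau m) / 2 -> u0 < u -> ph m tau b u <= 0).
Proof.
  intros Hd HT Hb Hnu HD.
  assert (HsT : 0 < sqrt (tau m)) by (apply sqrt_lt_R0; lra).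
  set (L := sqrt (tau m) / 2) in *.
  set (P := ph m tau b). set (D := Df m tau b).
  assert (Hg : forall v, 0 <= v <= L -> forall j, (1 <= j <= m)%nat -> v^2 < tau j).
  { intros v Hv. apply good_u; auto. unfold L in Hv; lra. }
  assert (Hder : forall v, 0 <= v <= L -> is_derive P v (- v * D v)).
  { intros v Hv. apply ph_derive. auto. }
  assert (HDp : forall v, 0 <= v <= L -> 0 <= D v).
  { intros v Hv. apply Df_nonneg; auto. }
  assert (Hdec : forall u w, 0 <= u <= w -> w <= L -> P w <= P u).
  { intros u w Hu Hw.
    assert (- P u <= - P w).
    { apply (mono_deriv (fun v => - P v) (fun v => - (- v * D v))). lra.
      intros x Hx. apply isd_opp. apply Hder. lra.
      intros x Hx. assert (0 <= D x) by (apply HDp; lra). nra. }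
    lra. }
  assert (Hgap : forall u w, 0 <= u <= w -> w <= L -> Rabs (P u) < 1/2 -> Rabs (P w) < 1/2 ->
      nu * (w^2 - u^2) <= P u - P w).
  { intros u w Hu Hw Hpu Hpw.
    assert (- P u - nu * u^2 <= - P w - nu * w^2).
    { apply (mono_deriv (fun v => - P v - nu * v^2) (fun v => - (- v * D v) - nu * (2 * v))). lra.
      intros x Hx. apply isd_minus. apply isd_opp. apply Hder. lra.
      apply isd_ext with (fun y => nu * y^2) (nu * (2 * x)). reflexivity. reflexivity.
      auto_derive; auto. ring.
      intros x Hx.
      assert (Hpx : Rabs (P x) < 1/2).
      { assert (P w <= P x) by (apply Hdec; lra). assert (P x <= P u) by (apply Hdec; lra).
        apply Rabs_def1; apply Rabs_def2 in Hpu; apply Rabs_def2 in Hpw; lra. }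
      assert (2 * nu <= D x) by (apply HD; auto; lra). nra. }
    lra. }
  assert (Hfrom : forall u0, 0 <= u0 <= L -> (0 < u0 -> 0 <= P u0) -> (u0 < L -> P u0 <= 0) ->
     exists u0, 0 <= u0 <= L /\
     (forall u, 0 < u <= L -> Rmin (1/2) (nu * Rabs (u^2 - u0^2)) <= Rabs (P u)) /\
     (forall u, 0 < u <= L -> u < u0 -> 0 <= P u) /\
     (forall u, 0 < u <= L -> u0 < u -> P u <= 0)).
  { intros u0 Hu0 H1 H2. exists u0. split; auto. split; [|split].
    - intros u Hu. destruct (Rlt_dec (Rabs (P u)) (1/2)) as [Hs|Hs].
      2: { eapply Rle_trans. apply Rmin_l. lra. }
      eapply Rle_trans. apply Rmin_r.
      destruct (Rle_dec u u0).
      + assert (HP0 : 0 <= P u0) by (destruct (Req_dec u u0); [subst; auto|]; apply H1; lra).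
        assert (P u0 <= P u) by (apply Hdec; lra).
        assert (Rabs (P u0) < 1/2) by (rewrite Rabs_right by lra; apply Rabs_def2 in Hs; lra).
        assert (nu * (u0^2 - u^2) <= P u - P u0) by (apply Hgap; auto; lra).
        rewrite Rabs_left1 by (assert (u^2 <= u0^2) by (apply sq_le_sq; lra); lra).
        rewrite Rabs_right by lra. lra.
      + assert (HP0 : P u0 <= 0) by (apply H2; lra).
        assert (P u <= P u0) by (apply Hdec; lra).
        assert (Rabs (P u0) < 1/2) by (rewrite Rabs_left1 by lra; apply Rabs_def2 in Hs; lra).
        assert (nu * (u^2 - u0^2) <= P u0 - P u) by (apply Hgap; auto; lra).
        rewrite Rabs_right by (assert (u0^2 <= u^2) by (apply sq_le_sq; lra); lra).
        rewrite Rabs_left1 by lra. lra.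
    - intros u Hu Hlt. assert (P u0 <= P u) by (apply Hdec; lra). specialize (H1 ltac:(lra)). lra.
    - intros u Hu Hlt. assert (P u <= P u0) by (apply Hdec; lra). specialize (H2 ltac:(lra)). lra. }
  assert (HL : 0 < L) by (unfold L; lra).
  destruct (Rle_dec 0 (P L)) as [HPL|HPL].
  { apply Hfrom with L. lra. auto. intros; lra. }
  destruct (Rle_dec (P 0) 0) as [HP0|HP0].
  { apply Hfrom with 0. lra. intros; lra. auto. }
  destruct (Ranalysis5.IVT_interv (fun v => - P v) 0 L) as [z [Hz Hz0]].
  { intros a Ha. apply (isd_cont (fun v => - P v) a (- (- a * D a))). apply isd_opp. apply Hder; lra. }
  lra. lra. lra.
  apply Hfrom with z. lra. intros; lra. intros; lra.
Qed.

Lemma gg_zero a0 chi m tau b omega k t : Hyps a0 chi m tau b omega k ->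
  sqrt (tau m) / 2 <= t -> gg chi m tau omega k t = 0.
Proof.
  intros H Ht. pose proof H as (Hc & Hm & H0 & H1 & _ & _ & HT & _).
  assert (HsT : 0 < sqrt (tau m)) by (apply sqrt_lt_R0; lra).
  unfold gg. rewrite H1. unfold Rdiv; ring.
  apply (Rmult_le_reg_r (sqrt (tau m))); auto. replace (t / sqrt (tau m) * sqrt (tau m)) with t by (field; lra). lra.
Qed.

Lemma isRInt_zero a y : is_RInt (fun _ : R => 0) a y zero.
Proof.
intros. pose proof (@is_RInt_const R_NormedModule a y 0) as Hc0.
replace (@zero R_NormedModule) with (@scal R_AbsRing R_NormedModule (y - a) 0). exact Hc0.
unfold scal, zero; simpl. unfold mult; simpl. ring.
Qed.

Lemma comp_isRInt CC a0 chi m tau b omega k a y : Hyps a0 chi m tau b omega k ->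
  (forall t, continuous CC t) -> (forall t, Rabs (CC t) <= 1) ->
  0 < a <= sqrt (tau m) / 2 -> sqrt (tau m) / 2 < y ->
  is_RInt (pp CC chi m tau b omega k) a y (RInt (p0 (pp CC chi m tau b omega k)) a (sqrt (tau m) / 2)).
Proof.
  intros H HC HC1 Ha Hy. pose proof H as (Hc & Hm & H0 & H1 & _ & _ & HT & _).
  assert (HsT : 0 < sqrt (tau m)) by (apply sqrt_lt_R0; lra).
  destruct (triv CC a0 chi m tau b omega k a (sqrt (tau m) / 2) H HC HC1 ltac:(lra) ltac:(lra)) as [Ex _].
  apply is_RInt_ext with (p0 (pp CC chi m tau b omega k)).
  { intros x Hx. rewrite Rmin_left, Rmax_right in Hx by lra. unfold p0. destruct (Rle_dec x 0); auto. lra. }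
  replace (RInt (p0 (pp CC chi m tau b omega k)) a (sqrt (tau m) / 2))
    with (plus (RInt (p0 (pp CC chi m tau b omega k)) a (sqrt (tau m) / 2)) zero) by (rewrite plus_zero_r; auto).
  apply (@is_RInt_Chasles R_NormedModule _ a (sqrt (tau m) / 2) y). apply (@RInt_correct R_CompleteNormedModule); auto.
  apply is_RInt_ext with (fun _ => 0).
  { intros x Hx. rewrite Rmin_left, Rmax_right in Hx by lra. unfold p0. destruct (Rle_dec x 0). lra.
    unfold pp. rewrite (gg_zero a0 chi m tau b omega k x H) by lra. rring. }
  apply isRInt_zero.
Qed.

Lemma integrand_fst chi m k tau b omega t :
  fst (integrand m k tau b chi omega t) = pp cos chi m tau b omega k t.
Proof. unfold integrand, pp, gg, expi. simpl. unfold scal; simpl. unfold mult; simpl. unfold Rdiv. ring. Qed.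

Lemma integrand_snd chi m k tau b omega t :
  snd (integrand m k tau b chi omega t) = pp sin chi m tau b omega k t.
Proof. unfold integrand, pp, gg, expi. simpl. unfold scal; simpl. unfold mult; simpl. unfold Rdiv. ring. Qed.

Lemma comp_small CC a0 chi m tau b omega k a eps : Hyps a0 chi m tau b omega k ->
  (forall t, continuous CC t) -> (forall t, Rabs (CC t) <= 1) -> 0 < eps ->
  0 < a -> a < Rmin (sqrt (tau m) / 2) (Rmin 1 (eps / (a0 / sqrt (tau k) + 1))) ->
  Rabs (RInt (p0 (pp CC chi m tau b omega k)) a (sqrt (tau m) / 2) -
        RInt (p0 (pp CC chi m tau b omega k)) 0 (sqrt (tau m) / 2)) < eps.
Proof.
  intros H HC HC1 He Ha Hd.
  pose proof H as (Hc & Hm & H0 & H1 & Hm1 & Hdd & HT & Hbpos & Ho & Hob & Hod & Hk).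
  destruct (tau_bounds m tau Hdd k Hk).
  assert (HsK : 0 < sqrt (tau k)) by (apply sqrt_lt_R0; lra).
  assert (HsT : 0 < sqrt (tau m)) by (apply sqrt_lt_R0; lra).
  assert (Ha0 : 0 <= a0) by (eapply Rle_trans; [apply Rabs_pos| apply (Hob 1 Rlt_0_1)]).
  set (A := a0 / sqrt (tau k)) in *. assert (HA : 0 <= A) by (apply Rdiv_le_0_compat; lra).
  assert (Hd1 := Rlt_le_trans _ _ _ Hd (Rmin_l _ _)).
  assert (Hd2 := Rlt_le_trans _ _ _ Hd (Rmin_r _ _)).
  assert (Hd3 := Rlt_le_trans _ _ _ Hd2 (Rmin_l _ _)).
  assert (Hd4 := Rlt_le_trans _ _ _ Hd2 (Rmin_r _ _)).
  destruct (triv CC a0 chi m tau b omega k 0 a H HC HC1 ltac:(lra) ltac:(lra)) as [E1 B1].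
  destruct (triv CC a0 chi m tau b omega k a (sqrt (tau m) / 2) H HC HC1 ltac:(lra) ltac:(lra)) as [E2 _].
  pose proof (RInt_Chasles _ _ _ _ E1 E2) as C. unfold plus in C; simpl in C. rewrite <- C.
  replace (RInt (p0 (pp CC chi m tau b omega k)) a (sqrt (tau m) / 2) -
    (RInt (p0 (pp CC chi m tau b omega k)) 0 a + RInt (p0 (pp CC chi m tau b omega k)) a (sqrt (tau m) / 2)))
    with (- RInt (p0 (pp CC chi m tau b omega k)) 0 a) by ring.
  rewrite Rabs_Ropp. fold A in B1. eapply Rle_lt_trans. apply B1.
  assert (A * (a^2 - 0^2) <= A * a) by (apply Rmult_le_compat_l; auto; nra).
  assert (A * a < eps).
  { apply Rle_lt_trans with ((A + 1) * a). nra.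
    apply Rmult_lt_reg_r with (/ (A + 1)). apply Rinv_0_lt_compat; lra.
    replace ((A + 1) * a * / (A + 1)) with a by (field; lra). exact Hd4. }
  lra.
Qed.

Lemma gen_part a0 chi m tau b omega k : Hyps a0 chi m tau b omega k ->
  is_RInt_gen (integrand m k tau b chi omega) (at_right 0) (Rbar_locally p_infty)
   (RInt (p0 (pp cos chi m tau b omega k)) 0 (sqrt (tau m) / 2),
    RInt (p0 (pp sin chi m tau b omega k)) 0 (sqrt (tau m) / 2)).
Proof.
  intros H. pose proof H as (Hc & Hm & H0 & H1 & Hm1 & Hdd & HT & Hbpos & Ho & Hob & Hod & Hk).
  assert (HsT : 0 < sqrt (tau m)) by (apply sqrt_lt_R0; lra).
  destruct (tau_bounds m tau Hdd k Hk).
  assert (HsK : 0 < sqrt (tau k)) by (apply sqrt_lt_R0; lra).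
  assert (Ha0 : 0 <= a0) by (eapply Rle_trans; [apply Rabs_pos| apply (Hob 1 Rlt_0_1)]).
  intros P [eps HP].
  set (dl := Rmin (sqrt (tau m) / 2) (Rmin 1 (eps / (a0 / sqrt (tau k) + 1)))).
  assert (Hdl : 0 < dl).
  { unfold dl. repeat apply Rmin_glb_lt; try lra. apply Rdiv_lt_0_compat. apply cond_pos.
    assert (0 <= a0 / sqrt (tau k)) by (apply Rdiv_le_0_compat; lra). lra. }
  apply Filter_prod with (fun a => 0 < a < dl) (fun y => sqrt (tau m) / 2 < y).
  - exists (mkposreal _ Hdl). intros x Hx Hx0. split; auto.
    unfold ball in Hx; simpl in Hx; unfold AbsRing_ball, abs, minus, plus, opp in Hx; simpl in Hx.
    apply Rabs_def2 in Hx. lra.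
  - exists (sqrt (tau m) / 2). auto.
  - intros a y Ha Hy. simpl.
    assert (Hdl1 : dl <= sqrt (tau m) / 2) by apply Rmin_l.
    exists (RInt (p0 (pp cos chi m tau b omega k)) a (sqrt (tau m) / 2),
            RInt (p0 (pp sin chi m tau b omega k)) a (sqrt (tau m) / 2)).
    split.
    + apply is_RInt_fct_extend_pair.
      * apply is_RInt_ext with (pp cos chi m tau b omega k).
        intros; rewrite integrand_fst; auto.
        apply comp_isRInt with a0; auto. apply continuous_cos. intros; apply Rabs_le; apply COS_bound. lra.
      * apply is_RInt_ext with (pp sin chi m tau b omega k).
        intros; rewrite integrand_snd; auto.
        apply comp_isRInt with a0; auto. apply continuous_sin. intros; apply Rabs_le; apply SIN_bound. lra.
    + apply HP. split.
      * apply (comp_small cos a0 chi m tau b omega k a eps H); auto. apply continuous_cos. intros; apply Rabs_le; apply COS_bound.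
        apply cond_pos. lra. apply Ha.
      * apply (comp_small sin a0 chi m tau b omega k a eps H); auto. apply continuous_sin. intros; apply Rabs_le; apply SIN_bound.
        apply cond_pos. lra. apply Ha.
Qed.

Lemma term_facts m (tau : nat -> R) v j :
  (forall j, (1 <= j)%nat -> (j < m)%nat -> tau (S j) <= tau j) -> 0 < tau m ->
  0 <= v <= sqrt (tau m) / 2 -> (1 <= j <= m)%nat ->
  3 / 4 * tau j <= tau j - v^2 /\ tau j - v^2 <= tau j /\ tau j <= tau 1%nat /\ tau m <= tau j.
Proof.
  intros Hd HT Hv Hj. destruct (tau_bounds m tau Hd j Hj).
  assert (HsT : 0 < sqrt (tau m)) by (apply sqrt_lt_R0; lra).
  assert (v^2 <= tau m / 4).
  { replace (tau m / 4) with ((sqrt (tau m) / 2)^2). apply sq_le_sq; lra.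
    unfold Rdiv. rewrite Rpow_mult_distr, pow2_sqrt by lra. field. }
  repeat split; try lra. assert (0 <= v^2) by nra. lra.
Qed.

Lemma D_ge_F m tau b v :
  (forall j, (1 <= j)%nat -> (j < m)%nat -> tau (S j) <= tau j) -> 0 < tau m ->
  (forall j, (1 <= j <= m)%nat -> 0 < b j) -> 0 <= v <= sqrt (tau m) / 2 ->
  Ff m tau b v / tau 1%nat <= Df m tau b v.
Proof.
  intros Hd HT Hb Hv. unfold Ff, Df. unfold Rdiv at 1. rewrite Rmult_comm, <- sum1_scal.
  apply sum1_le. intros j Hj. destruct (term_facts m tau v j Hd HT Hv Hj) as (E1 & E2 & E3 & E4).
  assert (0 < sqrt (tau j - v^2)) by (apply sqrt_lt_R0; lra). specialize (Hb j Hj).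
  replace (/ tau 1%nat * (b j / sqrt (tau j - v ^ 2))) with ((b j / sqrt (tau j - v ^ 2)) * / tau 1%nat) by ring.
  replace (b j / ((tau j - v ^ 2) * sqrt (tau j - v ^ 2))) with ((b j / sqrt (tau j - v ^ 2)) * / (tau j - v^2)) by (field; lra).
  apply Rmult_le_compat_l. apply Rlt_le, Rdiv_lt_0_compat; lra. apply Rinv_le_contravar; lra.
Qed.

Lemma F_le m tau b v :
  (forall j, (1 <= j)%nat -> (j < m)%nat -> tau (S j) <= tau j) -> 0 < tau m ->
  (forall j, (1 <= j <= m)%nat -> 0 < b j) -> 0 <= v <= sqrt (tau m) / 2 ->
  Ff m tau b v <= 2 * sum_n_m (fun j => b j / sqrt (tau j)) 1 m.
Proof.
  intros Hd HT Hb Hv. unfold Ff. rewrite <- sum1_scal. apply sum1_le. intros j Hj.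
  destruct (term_facts m tau v j Hd HT Hv Hj) as (E1 & E2 & E3 & E4).
  assert (0 < sqrt (tau j)) by (apply sqrt_lt_R0; lra).
  assert (0 < sqrt (tau j - v^2)) by (apply sqrt_lt_R0; lra). specialize (Hb j Hj).
  assert (sqrt (tau j) / 2 <= sqrt (tau j - v^2)).
  { replace (sqrt (tau j) / 2) with (sqrt (tau j / 4)). apply sqrt_le_1_alt; lra.
    replace (tau j / 4) with (tau j * / 2^2) by field. rewrite sqrt_mult_alt, sqrt_inv, sqrt_pow2; try lra. 
    }
  unfold Rdiv. replace (2 * (b j * / sqrt (tau j))) with (b j * / (sqrt (tau j) / 2)) by (field; lra).
  apply Rmult_le_compat_l. lra. apply Rinv_le_contravar; lra.
Qed.

Lemma F_ge_k m tau b v k :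
  (forall j, (1 <= j)%nat -> (j < m)%nat -> tau (S j) <= tau j) -> 0 < tau m ->
  (forall j, (1 <= j <= m)%nat -> 0 < b j) -> 0 <= v <= sqrt (tau m) / 2 -> (1 <= k <= m)%nat ->
  b k / sqrt (tau k) <= Ff m tau b v.
Proof.
  intros Hd HT Hb Hv Hk. unfold Ff.
  eapply Rle_trans; [|apply (sum1_term (fun j => b j / sqrt (tau j - v^2)) m k)]; auto.
  destruct (term_facts m tau v k Hd HT Hv Hk) as (E1 & E2 & E3 & E4).
  assert (0 < sqrt (tau k - v^2)) by (apply sqrt_lt_R0; lra). specialize (Hb k Hk).
  unfold Rdiv. apply Rmult_le_compat_l. lra. apply Rinv_le_contravar; auto. apply sqrt_le_1_alt; lra.
  intros j Hj. destruct (term_facts m tau v j Hd HT Hv Hj) as (E1 & E2 & E3 & E4).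
  assert (0 < sqrt (tau j - v^2)) by (apply sqrt_lt_R0; lra). specialize (Hb j Hj).
  apply Rlt_le, Rdiv_lt_0_compat; lra.
Qed.

Lemma D_ge_l m tau b v l :
  (forall j, (1 <= j)%nat -> (j < m)%nat -> tau (S j) <= tau j) -> 0 < tau m ->
  (forall j, (1 <= j <= m)%nat -> 0 < b j) -> 0 <= v <= sqrt (tau m) / 2 -> (1 <= l <= m)%nat ->
  b l / (tau l * sqrt (tau l)) <= Df m tau b v.
Proof.
  intros Hd HT Hb Hv Hk. unfold Df.
  eapply Rle_trans; [|apply (sum1_term (fun j => b j / ((tau j - v^2) * sqrt (tau j - v^2))) m l)]; auto.
  destruct (term_facts m tau v l Hd HT Hv Hk) as (E1 & E2 & E3 & E4).
  assert (0 < sqrt (tau l - v^2)) by (apply sqrt_lt_R0; lra). specialize (Hb l Hk).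
  assert (sqrt (tau l - v^2) <= sqrt (tau l)) by (apply sqrt_le_1_alt; lra).
  unfold Rdiv. apply Rmult_le_compat_l. lra. apply Rinv_le_contravar; auto.
  apply Rmult_lt_0_compat; lra. apply Rmult_le_compat; lra.
  intros j Hj. destruct (term_facts m tau v j Hd HT Hv Hj) as (E1 & E2 & E3 & E4).
  assert (0 < sqrt (tau j - v^2)) by (apply sqrt_lt_R0; lra). specialize (Hb j Hj).
  apply Rlt_le, Rdiv_lt_0_compat. lra. apply Rmult_lt_0_compat; lra.
Qed.

Lemma rpow14 S : 0 < S -> 0 < Rpower S (1/4) /\ (Rpower S (1/4))^2 = sqrt S.
Proof.
  intros HS. split. unfold Rpower; apply exp_pos.
  rewrite <- Rpower_pow by (unfold Rpower; apply exp_pos).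
  rewrite Rpower_mult. replace (1/4 * INR 2) with (/2) by (simpl; field).
  apply Rpower_sqrt; auto.
Qed.

Lemma rpow32 (m : nat) : (1 <= m)%nat -> Rpower (INR m) (3/2) = INR m * sqrt (INR m) /\ 1 <= INR m * sqrt (INR m).
Proof.
  intros Hm. assert (H1 : 1 <= INR m) by (apply (le_INR 1); lia).
  split. replace (3/2) with (1 + /2) by field. rewrite Rpower_plus, Rpower_1, Rpower_sqrt; lra.
  assert (1 <= sqrt (INR m)) by (rewrite <- sqrt_1; apply sqrt_le_1_alt; lra). nra.
Qed.

Lemma sqrt_sq_le x y : 0 <= x -> 0 <= y -> x^2 <= y^2 -> x <= y.
Proof. intros. nra. Qed.

Lemma lnT_bound T : 1 <= T -> ln T <= 2 * sqrt T.
Proof.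
  intros HT. assert (0 < sqrt T) by (apply sqrt_lt_R0; lra).
  replace (ln T) with (2 * ln (sqrt T)).
  pose proof (ln_sub1 (sqrt T) H). lra.
  rewrite <- (sqrt_sqrt T) at 2 by lra. rewrite ln_mult by lra. ring.
Qed.

Lemma comp_bound CC SS a0 chi m tau b omega k :
  Hyps a0 chi m tau b omega k ->
  (forall t, is_derive SS t (CC t)) -> (forall t, continuous CC t) -> (forall t, Rabs (SS t) <= 1) ->
  (forall t, Rabs (CC t) <= 1) ->
  Rabs (RInt (p0 (pp CC chi m tau b omega k)) 0 (sqrt (tau m) / 2))
   <= 641 * a0 * Rmin (Rpower (tau 1%nat) (1/4)) (Rpower (INR m) (3/2) / b k * maxb m b).
Proof.
  intros H HS HC HS1 HC1.
  pose proof H as (Hc & Hm & H0 & H1 & Hm1 & Hd & HT & Hbpos & Ho & Hob & Hod & Hk).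
  destruct (tau_bounds m tau Hd k Hk) as [HKT HK1].
  assert (HsK : 0 < sqrt (tau k)) by (apply sqrt_lt_R0; lra).
  assert (HsT : 0 < sqrt (tau m)) by (apply sqrt_lt_R0; lra).
  assert (HsS : 0 < sqrt (tau 1%nat)) by (apply sqrt_lt_R0; lra).
  assert (HsTK : sqrt (tau m) <= sqrt (tau k)) by (apply sqrt_le_1_alt; lra).
  assert (HsTS : sqrt (tau m) <= sqrt (tau 1%nat)) by (apply sqrt_le_1_alt; lra).
  assert (Ha0 : 0 <= a0) by (eapply Rle_trans; [apply Rabs_pos| apply (Hob 1 Rlt_0_1)]).
  set (A := a0 / sqrt (tau k)). assert (HA : 0 <= A) by (apply Rdiv_le_0_compat; lra).
  assert (HAT : A * sqrt (tau m) <= a0).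
  { unfold A. unfold Rdiv. rewrite Rmult_assoc. rewrite <- (Rmult_1_r a0) at 2.
    apply Rmult_le_compat_l; auto. apply (Rmult_le_reg_l (sqrt (tau k))); auto.
    rewrite <- Rmult_assoc, Rinv_r, Rmult_1_l, Rmult_1_r by lra. auto. }
  destruct (rpow14 (tau 1%nat) ltac:(lra)) as [Hq0 Hq2].
  set (q := Rpower (tau 1%nat) (1/4)) in *.
  destruct (rpow32 m Hm1) as [Hmm Hmm1]. rewrite Hmm. set (mm := INR m * sqrt (INR m)) in *.
  assert (Hbk : 0 < b k) by (apply Hbpos; auto).
  assert (HBk : b k <= maxb m b) by (apply maxb_ge; auto).
  set (B := maxb m b) in *.
  set (Mm := mm / b k * B).
  assert (HMm : 1 <= Mm).
  { unfold Mm. replace (mm / b k * B) with (mm * (B / b k)) by (field; lra).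
    assert (1 <= B / b k). { apply (Rmult_le_reg_r (b k)); auto. unfold Rdiv. rewrite Rmult_assoc, Rinv_l; lra. }
    nra. }
  set (L := sqrt (tau m) / 2).
  assert (HLT : L^2 = tau m / 4).
  { unfold L. unfold Rdiv. rewrite Rpow_mult_distr, pow2_sqrt by lra. field. }
  set (I := RInt (p0 (pp CC chi m tau b omega k)) 0 L).
  assert (Htriv : Rabs I <= a0 * sqrt (tau m) / 4).
  { destruct (triv CC a0 chi m tau b omega k 0 L H HC HC1 ltac:(unfold L; lra) ltac:(unfold L; lra)) as [_ Hb].
    fold A I in Hb. eapply Rle_trans; [exact Hb|]. rewrite HLT.
    assert (Hss : sqrt (tau m) * sqrt (tau m) = tau m) by (apply sqrt_sqrt; lra).
    assert (A * sqrt (tau m) * sqrt (tau m) <= a0 * sqrt (tau m)) by (apply Rmult_le_compat_r; lra).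
    replace (0^2) with 0 by ring. nra. }
  assert (HqT : sqrt (tau m) <= q^2) by (rewrite Hq2; auto).
  cut (Rabs I <= 641 * a0 * q /\ Rabs I <= 641 * a0 * Mm).
  { intros [X1 X2]. apply Rmin_case; auto. }
  destruct (Rlt_dec (tau m) 16) as [Hsmall|Hbig].
  {
    assert (Hs4 : sqrt (tau m) < 4).
    { apply Rnot_le_lt. intros Hc4. assert (4^2 <= sqrt (tau m) ^2) by (apply sq_le_sq; lra).
      rewrite pow2_sqrt in H2 by lra. lra. }
    split.
    - eapply Rle_trans; [exact Htriv|].
      assert (sqrt (tau m) / 4 <= q).
      { destruct (Rle_dec 1 q). lra. assert (q^2 <= q) by nra. lra. }
      nra.
    - eapply Rle_trans; [exact Htriv|]. nra. }
  assert (Hs4 : 4 <= sqrt (tau m)).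
  { rewrite <- (sqrt_pow2 4) by lra. apply sqrt_le_1_alt. lra. }
  assert (HX1 : 1 <= L^2) by (rewrite HLT; lra).
  assert (HlnX : A * ln (L^2) <= 2 * a0).
  { rewrite HLT. assert (ln (tau m / 4) <= ln (tau m)) by (apply ln_le'; lra).
    assert (ln (tau m) <= 2 * sqrt (tau m)) by (apply lnT_bound; lra).
    assert (0 <= ln (tau m / 4)) by (rewrite <- ln_1; apply ln_le'; lra).
    apply Rle_trans with (A * (2 * sqrt (tau m))). apply Rmult_le_compat_l; lra. nra. }
  assert (Hq2' : 2 <= q).
  { apply sqrt_sq_le; lra. }
  split.
  - destruct (Rle_dec (tau m ^ 2) (tau 1%nat)) as [Hl|Hl].
    + eapply Rle_trans; [exact Htriv|].
      assert (sqrt (tau m) <= q).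
      { apply sqrt_sq_le; try lra. rewrite pow2_sqrt by lra. rewrite Hq2.
        rewrite <- (sqrt_pow2 (tau m)) by lra. apply sqrt_le_1_alt; lra. }
      nra.
    + set (nu := / (4 * tau 1%nat)).
      assert (Hnu : 0 < nu <= 1/4).
      { unfold nu. split. apply Rinv_0_lt_compat; lra. rewrite Rinv_mult.
        replace (1/4) with (/4 * 1) by field. apply Rmult_le_compat_l. lra.
        rewrite <- Rinv_1. apply Rinv_le_contravar; lra. }
      destruct (find_u0 m tau b nu Hd HT Hbpos ltac:(lra)) as (u0 & Hu0 & Hmin & Hl1 & Hl2).
      { intros v Hv Hpv. pose proof (D_ge_F m tau b v Hd HT Hbpos Hv).
        unfold ph in Hpv. apply Rabs_def2 in Hpv.
        apply Rle_trans with (Ff m tau b v / tau 1%nat); auto.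
        replace (2 * nu) with ((1/2) / tau 1%nat) by (unfold nu; field; lra).
        unfold Rdiv. apply Rmult_le_compat_r. apply Rlt_le, Rinv_0_lt_compat; lra. lra. }
      destruct (master CC SS a0 chi m tau b omega k u0 nu H HS HC HS1 HC1 Hnu Hu0 HX1 Hmin Hl1 Hl2) as [_ Hb].
      fold A L I in Hb. eapply Rle_trans; [exact Hb|].
      assert (Hsn : / sqrt nu = 2 * sqrt (tau 1%nat)).
      { unfold nu. rewrite sqrt_inv, Rinv_inv, sqrt_mult_alt by lra.
        replace 4 with (2^2) by ring. rewrite sqrt_pow2 by lra. ring. }
      rewrite Hsn.
      assert (HqS : q <= sqrt (tau m)).
      { apply sqrt_sq_le; try lra. rewrite pow2_sqrt, Hq2 by lra.
        rewrite <- (sqrt_pow2 (tau m)) by lra. apply sqrt_le_1_alt; lra. }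
      assert (HAS : A * sqrt (tau 1%nat) <= a0 * q).
      { rewrite <- Hq2. unfold A.
        apply Rle_trans with (a0 / sqrt (tau m) * q^2).
        unfold Rdiv. apply Rmult_le_compat_r. nra. apply Rmult_le_compat_l; auto. apply Rinv_le_contravar; lra.
        replace (a0 / sqrt (tau m) * q^2) with (a0 * q * (q / sqrt (tau m))) by (field; lra).
        rewrite <- (Rmult_1_r (a0 * q)) at 2. apply Rmult_le_compat_l. nra.
        apply (Rmult_le_reg_r (sqrt (tau m))); auto. unfold Rdiv; rewrite Rmult_assoc, Rinv_l; lra. }
      nra.
  - set (Y := 48 * sqrt (tau k) * mm * B / b k).
    assert (HY : A * Y = 48 * a0 * Mm) by (unfold A, Y, Mm; field; lra).
    assert (HY0 : 0 < Y).
    { unfold Y. apply Rdiv_lt_0_compat; [|lra]. assert (0 < mm) by lra. assert (0 < B) by lra. apply Rmult_lt_0_compat; [|lra]. apply Rmult_lt_0_compat; [|lra]. apply Rmult_lt_0_compat; lra. }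
    set (nu := Rmin (1/4) (/ Y^2)).
    assert (Hnu : 0 < nu <= 1/4).
    { unfold nu. split. apply Rmin_glb_lt. lra. apply Rinv_0_lt_compat, pow_lt; lra. apply Rmin_l. }
    destruct (find_u0 m tau b nu Hd HT Hbpos ltac:(lra)) as (u0 & Hu0 & Hmin & Hl1 & Hl2).
    { intros v Hv Hpv. unfold ph in Hpv. apply Rabs_def2 in Hpv.
      assert (HFk := F_ge_k m tau b v k Hd HT Hbpos Hv Hk).
      assert (HFs := F_le m tau b v Hd HT Hbpos Hv).
      assert (Hbk2 : b k < 3/2 * sqrt (tau k)).
      { apply (Rmult_lt_reg_r (/ sqrt (tau k))). apply Rinv_0_lt_compat; lra.
        replace (3 / 2 * sqrt (tau k) * / sqrt (tau k)) with (3/2) by (field; lra). fold (b k / sqrt (tau k)). lra. }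
      destruct (sum1_avg (fun j => b j / sqrt (tau j)) m (1/4) ltac:(lia) ltac:(lra) ltac:(lra)) as (l & Hl & Hbl).
      assert (HDl := D_ge_l m tau b v l Hd HT Hbpos Hv Hl).
      destruct (tau_bounds m tau Hd l Hl) as [Htl1 Htl2].
      assert (Hsl : 0 < sqrt (tau l)) by (apply sqrt_lt_R0; lra).
      assert (Hbl0 : 0 < b l) by (apply Hbpos; auto).
      assert (HBl : b l <= B) by (apply maxb_ge; auto).
      assert (Hmr : 1 <= INR m) by (apply (le_INR 1); lia).
      set (z := b l / sqrt (tau l)) in *.
      assert (Hz : 1 / (8 * INR m) <= z).
      { replace (1 / (8 * INR m)) with (1 / 4 / (2 * INR m)) by (field; lra). exact Hbl. }
      assert (Hz0 : 0 < 1 / (8 * INR m)) by (apply Rdiv_lt_0_compat; lra).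
      assert (Heq : b l / (tau l * sqrt (tau l)) = z^3 / (b l)^2).
      { unfold z. replace (tau l) with (sqrt (tau l) * sqrt (tau l)) at 1 by (apply sqrt_sqrt; lra).
        field. lra. }
      assert (Hz3 : (1 / (8 * INR m))^3 / B^2 <= z^3 / (b l)^2).
      { unfold Rdiv at 1 2. apply Rmult_le_compat.
        apply pow_le; lra. apply Rlt_le, Rinv_0_lt_compat, pow_lt; lra.
        apply pow_incr; lra. apply Rinv_le_contravar. apply pow_lt; lra. apply sq_le_sq; lra. }
      assert (Hmm2 : mm^2 = INR m ^ 3).
      { unfold mm. rewrite Rpow_mult_distr, pow2_sqrt by lra. ring. }
      assert (HY2 : Y^2 = 2304 * tau k * INR m ^ 3 * B^2 / (b k)^2).
      { unfold Y. unfold Rdiv. rewrite !Rpow_mult_distr, pow2_sqrt, Hmm2 by lra. rewrite pow_inv. ring. }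
      assert (Hnu2 : 2 * nu <= 2 / Y^2).
      { unfold nu. unfold Rdiv. apply Rmult_le_compat_l. lra. rewrite Rmult_1_l. apply Rmin_r. }
      assert (Hfin : 2 / Y^2 <= (1 / (8 * INR m))^3 / B^2).
      { rewrite HY2.
        assert (HB0 : 0 < B) by lra.
        replace (2 / (2304 * tau k * INR m ^ 3 * B ^ 2 / b k ^ 2)) with (2 * (b k)^2 / (2304 * tau k * INR m ^ 3 * B ^ 2))
          by (field; repeat split; try lra; apply pow_nonzero; lra).
        replace ((1 / (8 * INR m))^3 / B^2) with (9/2 * tau k / (2304 * tau k * INR m ^ 3 * B ^ 2))
          by (field; repeat split; try lra; apply pow_nonzero; lra).
        unfold Rdiv. apply Rmult_le_compat_r. apply Rlt_le, Rinv_0_lt_compat.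
        repeat apply Rmult_lt_0_compat; try lra; apply pow_lt; lra.
        assert ((b k)^2 <= (3/2 * sqrt (tau k))^2) by (apply sq_le_sq; lra).
        rewrite Rpow_mult_distr, pow2_sqrt in H2 by lra. lra. }
      lra. }
    destruct (master CC SS a0 chi m tau b omega k u0 nu H HS HC HS1 HC1 Hnu Hu0 HX1 Hmin Hl1 Hl2) as [_ Hb].
    fold A L I in Hb. eapply Rle_trans; [exact Hb|].
    assert (Hsn : / sqrt nu <= 2 + Y).
    { unfold nu. apply Rmin_case.
      - replace (sqrt (1/4)) with (/2). rewrite Rinv_inv. lra.
        replace (1/4) with ((/2)^2) by field. rewrite sqrt_pow2; lra.
      - rewrite sqrt_inv, sqrt_pow2, Rinv_inv; lra. }
    assert (HA4 : 4 * A <= a0).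
    { assert (4 * A <= A * sqrt (tau m)) by nra. lra. }
    assert (A * / sqrt nu <= A * (2 + Y)) by (apply Rmult_le_compat_l; auto).
    unfold Rdiv in *. nra.
Qed.

Lemma Cmod_le_sum (x y : R) : Cmod (x, y) <= Rabs x + Rabs y.
Proof.
  unfold Cmod. cbn [fst snd]. rewrite <- (sqrt_pow2 (Rabs x + Rabs y)) by (pose proof (Rabs_pos x); pose proof (Rabs_pos y); lra).
  apply sqrt_le_1_alt. pose proof (Rabs_pos x); pose proof (Rabs_pos y).
  rewrite <- (pow2_abs x), <- (pow2_abs y). nra.
Qed.

Theorem corollary7p4 :
  forall (a0 : R) (chi : R -> R),
    (forall (n : nat) (x : R), ex_derive_n chi n x) ->
    (forall x y : R, x <= y -> chi x <= chi y) ->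
    (forall l : R, l <= 1/4 -> chi l = 0) ->
    (forall l : R, 1/2 <= l -> chi l = 1) ->
  exists C0 : R,
  forall (m : nat) (tau b : nat -> R) (omega : R -> R),
    (1 <= m)%nat ->
    (forall j : nat, (1 <= j)%nat -> (j < m)%nat -> tau (S j) <= tau j) ->
    0 < tau m ->
    (forall j : nat, (1 <= j)%nat -> (j <= m)%nat -> 0 < b j) ->
    (forall u : R, 0 < u -> ex_derive omega u) ->
    (forall u : R, 0 < u -> Rabs (omega u) <= a0) ->
    (forall u : R, 0 < u -> Rabs (Derive omega u) <= a0 / u) ->
  forall k : nat, (1 <= k)%nat -> (k <= m)%nat ->
    exists I : C,
      is_RInt_gen (integrand m k tau b chi omega)
        (at_right 0) (Rbar_locally p_infty) I /\
      Cmod I <= C0 * Rmin (Rpower (tau 1%nat) (1/4))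
                          (Rpower (INR m) (3/2) / b k * maxb m b).
Proof.
  intros a0 chi Hchi Hmono H0 H1.
  exists (1282 * Rabs a0).
  intros m tau b omega Hm Hd HT Hb Ho Hob Hod k Hk1 Hkm.
  assert (H : Hyps a0 chi m tau b omega k).
  { unfold Hyps. refine (conj _ (conj Hmono (conj H0 (conj H1 (conj Hm (conj Hd (conj HT (conj _ (conj Ho (conj Hob (conj Hod _))))))))))).
    intros x. exact (Hchi 1%nat x). intros j Hj; apply Hb; lia. lia. }
  assert (Ha0 : 0 <= a0) by (eapply Rle_trans; [apply Rabs_pos| apply (Hob 1 Rlt_0_1)]).
  replace (Rabs a0) with a0 by (symmetry; apply Rabs_right; lra).
  eexists. split. apply (gen_part a0). exact H.
  eapply Rle_trans. apply Cmod_le_sum.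
  assert (X1 := comp_bound cos sin a0 chi m tau b omega k H is_derive_sin continuous_cos
     ltac:(intros; apply Rabs_le; apply SIN_bound) ltac:(intros; apply Rabs_le; apply COS_bound)).
  assert (X2 := comp_bound sin (fun t => - cos t) a0 chi m tau b omega k H
     ltac:(intros t; apply isd_ext with (fun t => - cos t) (- - sin t); [reflexivity | rring | apply isd_opp; apply is_derive_cos])
     continuous_sin
     ltac:(intros; cbv beta; rewrite Rabs_Ropp; apply Rabs_le; apply COS_bound) ltac:(intros; apply Rabs_le; apply SIN_bound)).
  lra.
Qed.
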